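(* Let $a>1$, $m>0$, and let $(g,\phi)$ be a quasi-Einstein metric on $\mathbb{C}P^2\sharp2\overline{\mathbb{C}P}^2$ with $g=e^{2\sigma}g_K$, where $g_K$ is a $\mathbb{T}^2\times\mathbb{Z}_2$-invariant toric Kähler metric on the pentagon $P$ (notation as in the context), $t=x_1+x_2$, and $$\sigma=-\log(bt+c),\qquad \phi=-m\log\left(\frac{dbt+dc+1}{bt+c}\right)$$ for constants $b,c,d$ with $bt+c>0$ and $dbt+dc+1>0$ on $\overline P$. Let $\mu$ be a constant such that $1-\frac1m\big(\Delta_g\phi-|\nabla\phi|_g^2\big)=\mu\,e^{2\phi/m}$ on the manifold. Then $$\frac{4b}{(c-2b)(dc+1-2db)}=\frac{1}{(c-2b)^2}-\frac{\mu}{(dc+1-2db)^2},$$ $$0=\frac{1}{(c+(a-2)b)^2}-\frac{\mu}{(dc+1+(a-2)db)^2},$$ $$\frac{-2b}{(c+(a-1)b)(dc+1+(a-1)db)}=\frac{1}{(c+(a-1)b)^2}-\frac{\mu}{(dc+1+(a-1)db)^2},$$ and $$\int_P\Big(e^{-\phi}-\mu\,e^{\left(\frac2m-1\right)\phi}\Big)e^{4\sigma}\,dx=0,$$ where $dx=dx_1dx_2$ is Lebesgue measure on $P$.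
   Context: A quasi-Einstein metric satisfies $\mathrm{Ric}(g)+\nabla^2\phi-\frac1m d\phi\otimes d\phi=\lambda g$ for a smooth function $\phi$ and constants $\lambda$, $m>0$; $\Delta=\mathrm{tr}\,\nabla^2$ denotes the analyst's Laplacian. The moment polytope of $\mathbb{C}P^2\sharp2\overline{\mathbb{C}P}^2$ is the pentagon $P=\{l_i>0\}$, $l_1=1+x_1$, $l_2=1+x_2$, $l_3=a-1-x_1$, $l_4=a-1-x_2$, $l_5=a-1-x_1-x_2$, with vertices including $(-1,-1)$, $(-1,a-1)$, $(0,a-1)$. A $\mathbb{T}^2\times\mathbb{Z}_2$-invariant toric Kähler metric is, on $P^\circ\times\mathbb{T}^2$, $g_K=u_{ij}dx_idx_j+u^{ij}d\theta_id\theta_j$ with $u=\frac12(\sum_{i=1}^5 l_i\log l_i+f)$, $f$ smooth up to $\partial P$ and symmetric under $x_1\leftrightarrow x_2$, $(u^{ij})=(D^2u)^{-1}$; its volume form is a constant multiple of $dx_1dx_2\,d\theta_1d\theta_2$. *)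

(* Defs.v *)
From Stdlib Require Import Reals Lra List.
Import ListNotations.
From Coquelicot Require Import Coquelicot.
Open Scope R_scope.

Definition pt := (R * R)%type.

Definition d1 (F : pt -> R) : pt -> R :=
  fun p => Derive (fun s => F (s, snd p)) (fst p).
Definition d2 (F : pt -> R) : pt -> R :=
  fun p => Derive (fun s => F (fst p, s)) (snd p).

Fixpoint iter_pd (w : list bool) (F : pt -> R) : pt -> R :=
  match w with
  | nil => F
  | true :: w' => d1 (iter_pd w' F)
  | false :: w' => d2 (iter_pd w' F)
  end.

Definition smooth_on (U : pt -> Prop) (F : pt -> R) : Prop :=
  forall (w : list bool) (p : pt), U p ->
    continuous (iter_pd w F) p /\
    ex_derive (fun s => iter_pd w F (s, snd p)) (fst p) /\
    ex_derive (fun s => iter_pd w F (fst p, s)) (snd p).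

(** "F is smooth up to the boundary of the closed set K":
    F is smooth on some open neighbourhood of K. *)
Definition smooth_up_to (K : pt -> Prop) (F : pt -> R) : Prop :=
  exists U : pt -> Prop, open U /\ (forall p, K p -> U p) /\ smooth_on U F.

(** The pentagon of CP^2 # 2 (-CP^2). *)
Definition l1 (p : pt) : R := 1 + fst p.
Definition l2 (p : pt) : R := 1 + snd p.
Definition l3 (a : R) (p : pt) : R := a - 1 - fst p.
Definition l4 (a : R) (p : pt) : R := a - 1 - snd p.
Definition l5 (a : R) (p : pt) : R := a - 1 - fst p - snd p.

Definition inP (a : R) (p : pt) : Prop :=
  0 < l1 p /\ 0 < l2 p /\ 0 < l3 a p /\ 0 < l4 a p /\ 0 < l5 a p.
Definition closedP (a : R) (p : pt) : Prop :=
  0 <= l1 p /\ 0 <= l2 p /\ 0 <= l3 a p /\ 0 <= l4 a p /\ 0 <= l5 a p.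

Definition lprod (a : R) (p : pt) : R := l1 p * l2 p * l3 a p * l4 a p * l5 a p.

Definition potential (a : R) (f : pt -> R) (p : pt) : R :=
  / 2 * (l1 p * ln (l1 p) + l2 p * ln (l2 p) + l3 a p * ln (l3 a p)
         + l4 a p * ln (l4 a p) + l5 a p * ln (l5 a p) + f p).

Definition u11 a f := d1 (d1 (potential a f)).
Definition u12 a f := d1 (d2 (potential a f)).
Definition u22 a f := d2 (d2 (potential a f)).
Definition detH a f (p : pt) : R := u11 a f p * u22 a f p - u12 a f p * u12 a f p.
Definition uinv11 a f (p : pt) : R := u22 a f p / detH a f p.
Definition uinv12 a f (p : pt) : R := - u12 a f p / detH a f p.
Definition uinv22 a f (p : pt) : R := u11 a f p / detH a f p.

(** Coordinates on P° x T^2: index 0,1 = x1,x2 ; index 2,3 = theta1,theta2.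
    All quantities are T^2-invariant, so theta-derivatives vanish. *)
Definition pd (i : nat) (F : pt -> R) : pt -> R :=
  match i with
  | 0%nat => d1 F
  | 1%nat => d2 F
  | _ => fun _ => 0
  end.

Definition sum4 (F : nat -> R) : R := F 0%nat + F 1%nat + F 2%nat + F 3%nat.

Definition gK (a : R) (f : pt -> R) (i j : nat) (p : pt) : R :=
  match i, j with
  | 0%nat, 0%nat => u11 a f p
  | 0%nat, 1%nat | 1%nat, 0%nat => u12 a f p
  | 1%nat, 1%nat => u22 a f p
  | 2%nat, 2%nat => uinv11 a f p
  | 2%nat, 3%nat | 3%nat, 2%nat => uinv12 a f p
  | 3%nat, 3%nat => uinv22 a f p
  | _, _ => 0
  end.
Definition gKinv (a : R) (f : pt -> R) (i j : nat) (p : pt) : R :=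
  match i, j with
  | 0%nat, 0%nat => uinv11 a f p
  | 0%nat, 1%nat | 1%nat, 0%nat => uinv12 a f p
  | 1%nat, 1%nat => uinv22 a f p
  | 2%nat, 2%nat => u11 a f p
  | 2%nat, 3%nat | 3%nat, 2%nat => u12 a f p
  | 3%nat, 3%nat => u22 a f p
  | _, _ => 0
  end.

Definition confg (s : pt -> R) (G : nat -> nat -> pt -> R) (i j : nat) (p : pt) : R :=
  exp (2 * s p) * G i j p.
Definition confginv (s : pt -> R) (Gi : nat -> nat -> pt -> R) (i j : nat) (p : pt) : R :=
  exp (- (2 * s p)) * Gi i j p.

Definition christoffel (G Gi : nat -> nat -> pt -> R) (c i j : nat) (p : pt) : R :=
  / 2 * sum4 (fun k => Gi c k p *
        (pd i (G k j) p + pd j (G k i) p - pd k (G i j) p)).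

Definition ricci (G Gi : nat -> nat -> pt -> R) (i j : nat) (p : pt) : R :=
  sum4 (fun c => pd c (christoffel G Gi c i j) p)
  - pd j (fun q => sum4 (fun c => christoffel G Gi c i c q)) p
  + sum4 (fun c => sum4 (fun k =>
        christoffel G Gi c c k p * christoffel G Gi k i j p
        - christoffel G Gi c j k p * christoffel G Gi k i c p)).

Definition hessian (G Gi : nat -> nat -> pt -> R) (F : pt -> R) (i j : nat) (p : pt) : R :=
  pd i (pd j F) p - sum4 (fun c => christoffel G Gi c i j p * pd c F p).

(** Analyst's Laplacian = trace of the Hessian; squared gradient norm. *)
Definition laplacian (G Gi : nat -> nat -> pt -> R) (F : pt -> R) (p : pt) : R :=
  sum4 (fun i => sum4 (fun j => Gi i j p * hessian G Gi F i j p)).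
Definition gradsq (Gi : nat -> nat -> pt -> R) (F : pt -> R) (p : pt) : R :=
  sum4 (fun i => sum4 (fun j => Gi i j p * pd i F p * pd j F p)).

Definition quasi_einstein_on (D : pt -> Prop) (G Gi : nat -> nat -> pt -> R)
    (phi : pt -> R) (lam m : R) : Prop :=
  forall (p : pt) (i j : nat), D p -> (i < 4)%nat -> (j < 4)%nat ->
    ricci G Gi i j p + hessian G Gi phi i j p - / m * pd i phi p * pd j phi p
    = lam * G i j p.

Definition tcoord (p : pt) : R := fst p + snd p.
Definition sigma_ans (b c : R) (p : pt) : R := - ln (b * tcoord p + c).
Definition phi_ans (m b c d : R) (p : pt) : R :=
  - m * ln ((d * b * tcoord p + d * c + 1) / (b * tcoord p + c)).

(* Main.v *)
From Pilot Require Import Defs.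
From Stdlib Require Import Reals Lra List.
From Coquelicot Require Import Coquelicot.
Import Pilot.Defs.
Import ListNotations.
Open Scope R_scope.

Section Cont.
Context {U : UniformSpace}.
Lemma cR_plus (f g : U -> R) x : continuous f x -> continuous g x ->
  continuous (fun q => f q + g q) x.
Proof. intros; apply (continuous_plus f g); auto. Qed.
Lemma cR_opp (f : U -> R) x : continuous f x -> continuous (fun q => - f q) x.
Proof. intros; apply (continuous_opp f); auto. Qed.
Lemma cR_minus (f g : U -> R) x : continuous f x -> continuous g x ->
  continuous (fun q => f q - g q) x.
Proof. intros; apply cR_plus; auto; apply cR_opp; auto. Qed.
Lemma cR_mult (f g : U -> R) x : continuous f x -> continuous g x ->
  continuous (fun q => f q * g q) x.
Proof. intros; apply (continuous_mult f g); auto. Qed.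
Lemma cR_const (c : R) x : continuous (fun _ : U => c) x.
Proof. apply continuous_const. Qed.
Lemma cR_comp (f : U -> R) (g : R -> R) x : continuous f x -> continuous g (f x) ->
  continuous (fun q => g (f q)) x.
Proof. intros; apply (continuous_comp f g); auto. Qed.
Lemma cR_inv (f : U -> R) x : continuous f x -> f x <> 0 ->
  continuous (fun q => / f q) x.
Proof. intros; apply (cR_comp f (fun y => / y)); auto. apply continuous_Rinv; auto. Qed.
Lemma cR_exp (f : U -> R) x : continuous f x -> continuous (fun q => exp (f q)) x.
Proof. intros; apply (cR_comp f exp); auto. apply continuous_exp. Qed.
Lemma cR_ln (f : U -> R) x : continuous f x -> 0 < f x -> continuous (fun q => ln (f q)) x.
Proof. intros; apply (cR_comp f ln); auto. apply continuous_ln; auto. Qed.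
End Cont.

Lemma cP_fst (p : pt) : continuous (fun q : pt => fst q) p.
Proof. destruct p; apply continuous_fst. Qed.
Lemma cP_snd (p : pt) : continuous (fun q : pt => snd q) p.
Proof. destruct p; apply continuous_snd. Qed.

Lemma locR (x : R) (P : R -> Prop) :
  (exists eps : posreal, forall y, Rabs (y - x) < eps -> P y) -> locally x P.
Proof.
  intros [e He]; exists e; intros y Hy; apply He; exact Hy.
Qed.

Lemma inP_loc1 a x y : inP a (x, y) -> locally x (fun s => inP a (s, y)).
Proof.
  unfold inP, l1, l2, l3, l4, l5; simpl; intros (H1 & H2 & H3 & H4 & H5).
  apply locR.
  assert (Hm : 0 < Rmin (Rmin (1 + x) (a - 1 - x)) (a - 1 - x - y)).
  { repeat apply Rmin_pos; lra. }
  exists (mkposreal _ Hm); simpl; intros s Hs.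
  pose proof (Rmin_l (Rmin (1 + x) (a - 1 - x)) (a - 1 - x - y)).
  pose proof (Rmin_r (Rmin (1 + x) (a - 1 - x)) (a - 1 - x - y)).
  pose proof (Rmin_l (1 + x) (a - 1 - x)).
  pose proof (Rmin_r (1 + x) (a - 1 - x)).
  apply Rabs_def2 in Hs. lra.
Qed.

Lemma inP_loc2 a x y : inP a (x, y) -> locally y (fun s => inP a (x, s)).
Proof.
  unfold inP, l1, l2, l3, l4, l5; simpl; intros (H1 & H2 & H3 & H4 & H5).
  apply locR.
  assert (Hm : 0 < Rmin (Rmin (1 + y) (a - 1 - y)) (a - 1 - x - y)).
  { repeat apply Rmin_pos; lra. }
  exists (mkposreal _ Hm); simpl; intros s Hs.
  pose proof (Rmin_l (Rmin (1 + y) (a - 1 - y)) (a - 1 - x - y)).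
  pose proof (Rmin_r (Rmin (1 + y) (a - 1 - y)) (a - 1 - x - y)).
  pose proof (Rmin_l (1 + y) (a - 1 - y)).
  pose proof (Rmin_r (1 + y) (a - 1 - y)).
  apply Rabs_def2 in Hs. lra.
Qed.

Definition SM (K : pt -> Prop) (f : pt -> R) : Prop :=
  exists U : pt -> Prop, (forall p, K p -> U p) /\ smooth_on U f.

Lemma SM_of a f : smooth_up_to (closedP a) f -> SM (closedP a) f.
Proof. intros (U & _ & H1 & H2); exists U; auto. Qed.

Lemma inP_closed a p : inP a p -> closedP a p.
Proof. unfold inP, closedP; intuition lra. Qed.

Lemma SM_cont K f w p : SM K f -> K p -> continuous (iter_pd w f) p.
Proof. intros (U & HU & Hs) Hp; apply (Hs w p (HU p Hp)). Qed.
Lemma SM_ex1 K f w x y : SM K f -> K (x, y) -> ex_derive (fun s => iter_pd w f (s, y)) x.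
Proof. intros (U & HU & Hs) Hp; apply (Hs w (x,y) (HU _ Hp)). Qed.
Lemma SM_ex2 K f w x y : SM K f -> K (x, y) -> ex_derive (fun s => iter_pd w f (x, s)) y.
Proof. intros (U & HU & Hs) Hp; apply (Hs w (x,y) (HU _ Hp)). Qed.

Lemma d1_ext a (F0 G0 : pt -> R) p : inP a p -> (forall q, inP a q -> F0 q = G0 q) ->
  d1 F0 p = d1 G0 p.
Proof.
  destruct p as [x y]; intros Hp H; unfold d1; simpl.
  apply Derive_ext_loc. generalize (inP_loc1 a x y Hp).
  apply filter_imp; intros s Hs; auto.
Qed.
Lemma d2_ext a (F0 G0 : pt -> R) p : inP a p -> (forall q, inP a q -> F0 q = G0 q) ->
  d2 F0 p = d2 G0 p.
Proof.
  destruct p as [x y]; intros Hp H; unfold d2; simpl.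
  apply Derive_ext_loc. generalize (inP_loc2 a x y Hp).
  apply filter_imp; intros s Hs; auto.
Qed.
Lemma ex1_ext a (F0 G0 : pt -> R) x y : inP a (x, y) -> (forall q, inP a q -> G0 q = F0 q) ->
  ex_derive (fun s => G0 (s, y)) x -> ex_derive (fun s => F0 (s, y)) x.
Proof.
  intros Hp H; apply ex_derive_ext_loc. generalize (inP_loc1 a x y Hp).
  apply filter_imp; intros s Hs; auto.
Qed.
Lemma ex2_ext a (F0 G0 : pt -> R) x y : inP a (x, y) -> (forall q, inP a q -> G0 q = F0 q) ->
  ex_derive (fun s => G0 (x, s)) y -> ex_derive (fun s => F0 (x, s)) y.
Proof.
  intros Hp H; apply ex_derive_ext_loc. generalize (inP_loc2 a x y Hp).
  apply filter_imp; intros s Hs; auto.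
Qed.

Lemma is_derive_halfsum (E H : R -> R) x dE :
  is_derive E x dE -> ex_derive H x ->
  is_derive (fun s => /2 * (E s + H s)) x (/2 * (dE + Derive H x)).
Proof.
  intros HE HH.
  pose proof (is_derive_plus E H x dE (Derive H x) HE (Derive_correct _ _ HH)) as H1.
  exact (is_derive_scal _ x (/2) _ H1).
Qed.

Lemma d1pot a f x y : SM (closedP a) f -> inP a (x, y) ->
  d1 (potential a f) (x, y) =
  /2 * (ln (1 + x) - ln (a - 1 - x) - ln (a - 1 - x - y) - 1 + d1 f (x, y)).
Proof.
  intros Hsm Hp. pose proof Hp as Hp'. unfold inP, l1, l2, l3, l4, l5 in Hp'; simpl in Hp'.
  unfold d1; simpl. apply is_derive_unique.
  unfold potential, l1, l2, l3, l4, l5; simpl.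
  apply (is_derive_ext (fun s => /2 * (((1+s)*ln(1+s) + (1+y)*ln(1+y) + (a-1-s)*ln(a-1-s)
     + (a-1-y)*ln(a-1-y) + (a-1-s-y)*ln(a-1-s-y)) + f (s, y)))).
  { intros; reflexivity. }
  replace (/ 2 * (ln (1 + x) - ln (a - 1 - x) - ln (a - 1 - x - y) - 1 +
      Derive (fun s : R => f (s, y)) x)) with
    (/ 2 * ((ln (1 + x) - ln (a - 1 - x) - ln (a - 1 - x - y) - 1) +
      Derive (fun s : R => f (s, y)) x)) by ring.
  apply is_derive_halfsum.
  - auto_derive. repeat split; lra. unfold Rminus in *. field. repeat split; lra.
  - apply (SM_ex1 _ f nil x y Hsm). apply inP_closed; auto.
Qed.

Lemma d2pot a f x y : SM (closedP a) f -> inP a (x, y) ->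
  d2 (potential a f) (x, y) =
  /2 * (ln (1 + y) - ln (a - 1 - y) - ln (a - 1 - x - y) - 1 + d2 f (x, y)).
Proof.
  intros Hsm Hp. pose proof Hp as Hp'. unfold inP, l1, l2, l3, l4, l5 in Hp'; simpl in Hp'.
  unfold d2; simpl. apply is_derive_unique.
  unfold potential, l1, l2, l3, l4, l5; simpl.
  apply (is_derive_ext (fun s => /2 * (((1+x)*ln(1+x) + (1+s)*ln(1+s) + (a-1-x)*ln(a-1-x)
     + (a-1-s)*ln(a-1-s) + (a-1-x-s)*ln(a-1-x-s)) + f (x, s)))).
  { intros; reflexivity. }
  replace (/ 2 * (ln (1 + y) - ln (a - 1 - y) - ln (a - 1 - x - y) - 1 +
      Derive (fun s : R => f (x, s)) y)) with
    (/ 2 * ((ln (1 + y) - ln (a - 1 - y) - ln (a - 1 - x - y) - 1) +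
      Derive (fun s : R => f (x, s)) y)) by ring.
  apply is_derive_halfsum.
  - auto_derive. repeat split; lra. unfold Rminus in *. field. repeat split; lra.
  - apply (SM_ex2 _ f nil x y Hsm). apply inP_closed; auto.
Qed.

Definition F11 f := iter_pd [true; true] f.
Definition F12 f := iter_pd [true; false] f.
Definition F22 f := iter_pd [false; false] f.

Definition u11e a f (q : pt) := /2 * (/ l1 q + / l3 a q + / l5 a q + F11 f q).
Definition u12e a f (q : pt) := /2 * (/ l5 a q + F12 f q).
Definition u22e a f (q : pt) := /2 * (/ l2 q + / l4 a q + / l5 a q + F22 f q).

Lemma u11_int a f p : SM (closedP a) f -> inP a p -> u11 a f p = u11e a f p.
Proof.
  intros Hsm Hp. unfold u11.
  rewrite (d1_ext a (d1 (potential a f)) (fun q => /2*(ln(1+fst q) - ln(a-1-fst q)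
     - ln(a-1-fst q - snd q) - 1 + d1 f q)) p Hp).
  2:{ intros [x y] Hq; simpl. apply d1pot; auto. }
  destruct p as [x y]. pose proof Hp as Hp'. unfold inP, l1, l2, l3, l4, l5 in Hp'; simpl in Hp'.
  unfold d1 at 1; simpl. apply is_derive_unique.
  unfold u11e, l1, l3, l5, F11; simpl.
  replace (/ 2 * (/ (1 + x) + / (a - 1 - x) + / (a - 1 - x - y) + d1 (d1 f) (x, y)))
  with (/ 2 * ((/ (1 + x) + / (a - 1 - x) + / (a - 1 - x - y)) + Derive (fun s => d1 f (s, y)) x))
  by reflexivity.
  apply is_derive_halfsum.
  - auto_derive. repeat split; lra. unfold Rminus in *. field. repeat split; lra.
  - apply (SM_ex1 _ f [true] x y Hsm). apply inP_closed; auto.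
Qed.

Lemma u12_int a f p : SM (closedP a) f -> inP a p -> u12 a f p = u12e a f p.
Proof.
  intros Hsm Hp. unfold u12.
  rewrite (d1_ext a (d2 (potential a f)) (fun q => /2*(ln(1+snd q) - ln(a-1-snd q)
     - ln(a-1-fst q - snd q) - 1 + d2 f q)) p Hp).
  2:{ intros [x y] Hq; simpl. apply d2pot; auto. }
  destruct p as [x y]. pose proof Hp as Hp'. unfold inP, l1, l2, l3, l4, l5 in Hp'; simpl in Hp'.
  unfold d1 at 1; simpl. apply is_derive_unique.
  unfold u12e, l1, l3, l5, F12; simpl.
  replace (/ 2 * (/ (a - 1 - x - y) + d1 (d2 f) (x, y)))
  with (/ 2 * ((/ (a - 1 - x - y)) + Derive (fun s => d2 f (s, y)) x))
  by reflexivity.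
  apply is_derive_halfsum.
  - auto_derive. repeat split; lra. unfold Rminus in *. field. repeat split; lra.
  - apply (SM_ex1 _ f [false] x y Hsm). apply inP_closed; auto.
Qed.

Lemma u22_int a f p : SM (closedP a) f -> inP a p -> u22 a f p = u22e a f p.
Proof.
  intros Hsm Hp. unfold u22.
  rewrite (d2_ext a (d2 (potential a f)) (fun q => /2*(ln(1+snd q) - ln(a-1-snd q)
     - ln(a-1-fst q - snd q) - 1 + d2 f q)) p Hp).
  2:{ intros [x y] Hq; simpl. apply d2pot; auto. }
  destruct p as [x y]. pose proof Hp as Hp'. unfold inP, l1, l2, l3, l4, l5 in Hp'; simpl in Hp'.
  unfold d2 at 1; simpl. apply is_derive_unique.
  unfold u22e, l2, l4, l5, F22; simpl.
  replace (/ 2 * (/ (1 + y) + / (a - 1 - y) + / (a - 1 - x - y) + d2 (d2 f) (x, y)))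
  with (/ 2 * ((/ (1 + y) + / (a - 1 - y) + / (a - 1 - x - y)) + Derive (fun s => d2 f (x, s)) y))
  by reflexivity.
  apply is_derive_halfsum.
  - auto_derive. repeat split; lra. unfold Rminus in *. field. repeat split; lra.
  - apply (SM_ex2 _ f [false] x y Hsm). apply inP_closed; auto.
Qed.

Definition exd (F0 : pt -> R) (p : pt) : Prop :=
  ex_derive (fun s => F0 (s, snd p)) (fst p) /\ ex_derive (fun s => F0 (fst p, s)) (snd p).

Lemma exd_halfsum1 (E : R -> R) (H : R -> R) x :
  ex_derive E x -> ex_derive H x -> ex_derive (fun s => /2 * (E s + H s)) x.
Proof.
  intros [dE HE] HH. exists (/2 * (dE + Derive H x)). apply is_derive_halfsum; auto.
Qed.

Lemma exd_u11 a f p : SM (closedP a) f -> inP a p -> exd (u11 a f) p.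
Proof.
  intros Hsm Hp. destruct p as [x y]. pose proof Hp as Hp'.
  unfold inP, l1, l2, l3, l4, l5 in Hp'; simpl in Hp'. split; simpl.
  - apply (ex1_ext a _ (u11e a f) x y Hp). { intros; symmetry; apply u11_int; auto. }
    unfold u11e, l1, l3, l5; simpl.
    apply (exd_halfsum1 (fun s => / (1 + s) + / (a - 1 - s) + / (a - 1 - s - y))
            (fun s => F11 f (s, y))).
    + auto_derive. repeat split; lra.
    + apply (SM_ex1 _ f _ x y Hsm). apply inP_closed; auto.
  - apply (ex2_ext a _ (u11e a f) x y Hp). { intros; symmetry; apply u11_int; auto. }
    unfold u11e, l1, l3, l5; simpl.
    apply (exd_halfsum1 (fun s => / (1 + x) + / (a - 1 - x) + / (a - 1 - x - s))
            (fun s => F11 f (x, s))).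
    + auto_derive. repeat split; lra.
    + apply (SM_ex2 _ f _ x y Hsm). apply inP_closed; auto.
Qed.

Lemma exd_u12 a f p : SM (closedP a) f -> inP a p -> exd (u12 a f) p.
Proof.
  intros Hsm Hp. destruct p as [x y]. pose proof Hp as Hp'.
  unfold inP, l1, l2, l3, l4, l5 in Hp'; simpl in Hp'. split; simpl.
  - apply (ex1_ext a _ (u12e a f) x y Hp). { intros; symmetry; apply u12_int; auto. }
    unfold u12e, l1, l3, l5; simpl.
    apply (exd_halfsum1 (fun s => / (a - 1 - s - y)) (fun s => F12 f (s, y))).
    + auto_derive. repeat split; lra.
    + apply (SM_ex1 _ f _ x y Hsm). apply inP_closed; auto.
  - apply (ex2_ext a _ (u12e a f) x y Hp). { intros; symmetry; apply u12_int; auto. }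
    unfold u12e, l1, l3, l5; simpl.
    apply (exd_halfsum1 (fun s => / (a - 1 - x - s)) (fun s => F12 f (x, s))).
    + auto_derive. repeat split; lra.
    + apply (SM_ex2 _ f _ x y Hsm). apply inP_closed; auto.
Qed.

Lemma exd_u22 a f p : SM (closedP a) f -> inP a p -> exd (u22 a f) p.
Proof.
  intros Hsm Hp. destruct p as [x y]. pose proof Hp as Hp'.
  unfold inP, l1, l2, l3, l4, l5 in Hp'; simpl in Hp'. split; simpl.
  - apply (ex1_ext a _ (u22e a f) x y Hp). { intros; symmetry; apply u22_int; auto. }
    unfold u22e, l2, l4, l5; simpl.
    apply (exd_halfsum1 (fun s => / (1 + y) + / (a - 1 - y) + / (a - 1 - s - y))
            (fun s => F22 f (s, y))).
    + auto_derive. repeat split; lra.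
    + apply (SM_ex1 _ f _ x y Hsm). apply inP_closed; auto.
  - apply (ex2_ext a _ (u22e a f) x y Hp). { intros; symmetry; apply u22_int; auto. }
    unfold u22e, l2, l4, l5; simpl.
    apply (exd_halfsum1 (fun s => / (1 + s) + / (a - 1 - s) + / (a - 1 - x - s))
            (fun s => F22 f (x, s))).
    + auto_derive. repeat split; lra.
    + apply (SM_ex2 _ f _ x y Hsm). apply inP_closed; auto.
Qed.

Lemma exd_mult (F0 G0 : pt -> R) p : exd F0 p -> exd G0 p -> exd (fun q => F0 q * G0 q) p.
Proof. intros [H1 H2] [H3 H4]; split; apply ex_derive_mult; auto. Qed.
Lemma exd_minus (F0 G0 : pt -> R) p : exd F0 p -> exd G0 p -> exd (fun q => F0 q - G0 q) p.
Proof. intros [H1 H2] [H3 H4]; split; apply (ex_derive_minus (fun s => F0 _) (fun s => G0 _)); auto. Qed.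
Lemma exd_plus (F0 G0 : pt -> R) p : exd F0 p -> exd G0 p -> exd (fun q => F0 q + G0 q) p.
Proof. intros [H1 H2] [H3 H4]; split; apply (ex_derive_plus (fun s => F0 _) (fun s => G0 _)); auto. Qed.
Lemma exd_div (F0 G0 : pt -> R) p : exd F0 p -> exd G0 p -> G0 p <> 0 -> exd (fun q => F0 q / G0 q) p.
Proof. destruct p as [x y]; intros [H1 H2] [H3 H4] Hn; split; apply ex_derive_div; auto. Qed.
Lemma exd_opp (F0 : pt -> R) p : exd F0 p -> exd (fun q => - F0 q) p.
Proof. intros [H1 H2]; split; apply (ex_derive_opp (fun s => F0 _)); auto. Qed.
Lemma exd_const c p : exd (fun _ => c) p.
Proof. split; apply ex_derive_const. Qed.
Lemma exd_expc (F0 : pt -> R) k p : exd F0 p -> exd (fun q => exp (k * F0 q)) p.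
Proof.
  intros [H1 H2]; split.
  - apply (ex_derive_comp exp (fun s => k * F0 (s, snd p))). apply ex_derive_Reals_1, derivable_pt_exp.
    apply ex_derive_scal; auto.
  - apply (ex_derive_comp exp (fun s => k * F0 (fst p, s))). apply ex_derive_Reals_1, derivable_pt_exp.
    apply ex_derive_scal; auto.
Qed.

Lemma pd_ge2 n (F0 : pt -> R) p : pd (S (S n)) F0 p = 0.
Proof. reflexivity. Qed.
Lemma pd_c i c p : pd i (fun _ => c) p = 0.
Proof. destruct i as [|[|i]]; simpl; auto; unfold d1, d2; apply Derive_const. Qed.

Lemma pd_mult i (F0 G0 : pt -> R) p : exd F0 p -> exd G0 p ->
  pd i (fun q => F0 q * G0 q) p = pd i F0 p * G0 p + F0 p * pd i G0 p.
Proof.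
  destruct p as [x y]; intros [H1 H2] [H3 H4].
  destruct i as [|[|i]]; simpl; unfold d1, d2; simpl.
  - apply Derive_mult; auto.
  - apply Derive_mult; auto.
  - ring.
Qed.
Lemma pd_minus i (F0 G0 : pt -> R) p : exd F0 p -> exd G0 p ->
  pd i (fun q => F0 q - G0 q) p = pd i F0 p - pd i G0 p.
Proof.
  destruct p as [x y]; intros [H1 H2] [H3 H4].
  destruct i as [|[|i]]; simpl; unfold d1, d2; simpl.
  - apply (Derive_minus (fun s => F0 _) (fun s => G0 _)); auto.
  - apply (Derive_minus (fun s => F0 _) (fun s => G0 _)); auto.
  - ring.
Qed.
Lemma pd_plus i (F0 G0 : pt -> R) p : exd F0 p -> exd G0 p ->
  pd i (fun q => F0 q + G0 q) p = pd i F0 p + pd i G0 p.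
Proof.
  destruct p as [x y]; intros [H1 H2] [H3 H4].
  destruct i as [|[|i]]; simpl; unfold d1, d2; simpl.
  - apply (Derive_plus (fun s => F0 _) (fun s => G0 _)); auto.
  - apply (Derive_plus (fun s => F0 _) (fun s => G0 _)); auto.
  - ring.
Qed.
Lemma pd_div i (F0 G0 : pt -> R) p : exd F0 p -> exd G0 p -> G0 p <> 0 ->
  pd i (fun q => F0 q / G0 q) p = (pd i F0 p * G0 p - F0 p * pd i G0 p) / (G0 p ^ 2).
Proof.
  destruct p as [x y]; intros [H1 H2] [H3 H4] Hn.
  destruct i as [|[|i]]; simpl; unfold d1, d2; simpl.
  - apply Derive_div; auto.
  - apply Derive_div; auto.
  - field; auto.
Qed.
Lemma pd_expc i (F0 : pt -> R) k p : exd F0 p ->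
  pd i (fun q => exp (k * F0 q)) p = exp (k * F0 p) * (k * pd i F0 p).
Proof.
  destruct p as [x y]; intros [H1 H2].
  destruct i as [|[|i]]; simpl; unfold d1, d2; simpl.
  - rewrite (Derive_comp exp (fun s => k * F0 (s, y))).
    + rewrite Derive_scal, (is_derive_unique exp _ _ (is_derive_exp _)); ring.
    + apply ex_derive_Reals_1, derivable_pt_exp.
    + apply ex_derive_scal; auto.
  - rewrite (Derive_comp exp (fun s => k * F0 (x, s))).
    + rewrite Derive_scal, (is_derive_unique exp _ _ (is_derive_exp _)); ring.
    + apply ex_derive_Reals_1, derivable_pt_exp.
    + apply ex_derive_scal; auto.
  - ring.
Qed.

Lemma exd_detH a f p : SM (closedP a) f -> inP a p -> exd (fun q => detH a f q) p.
Proof.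
  intros Hs Hp. unfold detH.
  pose proof (exd_u11 a f p Hs Hp). pose proof (exd_u12 a f p Hs Hp).
  pose proof (exd_u22 a f p Hs Hp).
  apply (exd_minus (fun q => u11 a f q * u22 a f q) (fun q => u12 a f q * u12 a f q)).
  - exact (exd_mult (fun q => u11 a f q) (fun q => u22 a f q) p H H1).
  - exact (exd_mult (fun q => u12 a f q) (fun q => u12 a f q) p H0 H0).
Qed.

Lemma exd_gK a f p : SM (closedP a) f -> inP a p -> detH a f p <> 0 ->
  forall k j, exd (gK a f k j) p.
Proof.
  intros Hs Hp Hd k j.
  pose proof (exd_u11 a f p Hs Hp) as E11. pose proof (exd_u12 a f p Hs Hp) as E12.
  pose proof (exd_u22 a f p Hs Hp) as E22. pose proof (exd_detH a f p Hs Hp) as ED.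
  assert (I11 : exd (fun q => uinv11 a f q) p)
    by exact (exd_div (fun q => u22 a f q) (fun q => detH a f q) p E22 ED Hd).
  assert (I22 : exd (fun q => uinv22 a f q) p)
    by exact (exd_div (fun q => u11 a f q) (fun q => detH a f q) p E11 ED Hd).
  assert (I12 : exd (fun q => uinv12 a f q) p)
    by exact (exd_div (fun q => - u12 a f q) (fun q => detH a f q) p
                (exd_opp (fun q => u12 a f q) p E12) ED Hd).
  destruct k as [|[|[|[|k]]]]; destruct j as [|[|[|[|j]]]]; cbv beta iota delta [gK];
   first [exact (exd_const 0 p) | exact E11 | exact E12 | exact E22 | exact I11 | exact I12 | exact I22].
Qed.

Lemma pd_confg s G p : exd s p -> (forall k j, exd (G k j) p) ->
  forall i k j, pd i (confg s G k j) p =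
   exp (2 * s p) * (2 * pd i s p) * G k j p + exp (2 * s p) * pd i (G k j) p.
Proof.
  intros Hs HG i k j. unfold confg.
  rewrite (pd_mult i (fun q => exp (2 * s q)) (G k j)).
  - rewrite (pd_expc i s 2 p Hs). reflexivity.
  - exact (exd_expc s 2 p Hs).
  - apply HG.
Qed.

Lemma pd_detH a f p i : SM (closedP a) f -> inP a p ->
  pd i (fun q => detH a f q) p =
   pd i (fun q => u11 a f q) p * u22 a f p + u11 a f p * pd i (fun q => u22 a f q) p
   - (pd i (fun q => u12 a f q) p * u12 a f p + u12 a f p * pd i (fun q => u12 a f q) p).
Proof.
  intros Hs Hp. unfold detH.
  pose proof (exd_u11 a f p Hs Hp) as E11. pose proof (exd_u12 a f p Hs Hp) as E12.
  pose proof (exd_u22 a f p Hs Hp) as E22.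
  rewrite (pd_minus i (fun q => u11 a f q * u22 a f q) (fun q => u12 a f q * u12 a f q) p
     (exd_mult (fun q => u11 a f q) (fun q => u22 a f q) p E11 E22)
     (exd_mult (fun q => u12 a f q) (fun q => u12 a f q) p E12 E12)).
  rewrite (pd_mult i (fun q => u11 a f q) (fun q => u22 a f q) p E11 E22).
  rewrite (pd_mult i (fun q => u12 a f q) (fun q => u12 a f q) p E12 E12).
  reflexivity.
Qed.

Lemma pd_uinv11 a f p i : SM (closedP a) f -> inP a p -> detH a f p <> 0 ->
  pd i (fun q => uinv11 a f q) p =
   (pd i (fun q => u22 a f q) p * detH a f p - u22 a f p * pd i (fun q => detH a f q) p)
    / detH a f p ^ 2.
Proof.
  intros Hs Hp Hd. unfold uinv11.
  exact (pd_div i (fun q => u22 a f q) (fun q => detH a f q) p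
     (exd_u22 a f p Hs Hp) (exd_detH a f p Hs Hp) Hd).
Qed.
Lemma pd_uinv22 a f p i : SM (closedP a) f -> inP a p -> detH a f p <> 0 ->
  pd i (fun q => uinv22 a f q) p =
   (pd i (fun q => u11 a f q) p * detH a f p - u11 a f p * pd i (fun q => detH a f q) p)
    / detH a f p ^ 2.
Proof.
  intros Hs Hp Hd. unfold uinv22.
  exact (pd_div i (fun q => u11 a f q) (fun q => detH a f q) p
     (exd_u11 a f p Hs Hp) (exd_detH a f p Hs Hp) Hd).
Qed.
Lemma pd_opp i (F0 : pt -> R) p : exd F0 p -> pd i (fun q => - F0 q) p = - pd i F0 p.
Proof.
  destruct p as [x y]; intros [H1 H2].
  destruct i as [|[|i]]; simpl; unfold d1, d2; simpl.
  - apply (Derive_opp (fun s => F0 _)).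
  - apply (Derive_opp (fun s => F0 _)).
  - ring.
Qed.
Lemma pd_uinv12 a f p i : SM (closedP a) f -> inP a p -> detH a f p <> 0 ->
  pd i (fun q => uinv12 a f q) p =
   (- pd i (fun q => u12 a f q) p * detH a f p + u12 a f p * pd i (fun q => detH a f q) p)
    / detH a f p ^ 2.
Proof.
  intros Hs Hp Hd. unfold uinv12.
  pose proof (exd_u12 a f p Hs Hp) as E12.
  rewrite (pd_div i (fun q => - u12 a f q) (fun q => detH a f q) p
     (exd_opp _ p E12) (exd_detH a f p Hs Hp) Hd).
  rewrite (pd_opp i (fun q => u12 a f q) p E12). field. exact Hd.
Qed.

Lemma lapA a f (s phi : pt -> R) p : SM (closedP a) f -> inP a p -> detH a f p <> 0 ->
  exd s p ->
  laplacian (confg s (gK a f)) (confginv s (gKinv a f)) phi p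
  - gradsq (confginv s (gKinv a f)) phi p =
  exp (- (2 * s p)) *
  ( uinv11 a f p * pd 0 (pd 0 phi) p + uinv12 a f p * pd 0 (pd 1 phi) p
  + uinv12 a f p * pd 1 (pd 0 phi) p + uinv22 a f p * pd 1 (pd 1 phi) p
  + (pd 0 (fun q => uinv11 a f q) p + pd 1 (fun q => uinv12 a f q) p) * pd 0 phi p
  + (pd 0 (fun q => uinv12 a f q) p + pd 1 (fun q => uinv22 a f q) p) * pd 1 phi p
  + 2 * (uinv11 a f p * pd 0 s p * pd 0 phi p + uinv12 a f p * pd 0 s p * pd 1 phi p
       + uinv12 a f p * pd 1 s p * pd 0 phi p + uinv22 a f p * pd 1 s p * pd 1 phi p)
  - (uinv11 a f p * pd 0 phi p * pd 0 phi p + 2 * uinv12 a f p * pd 0 phi p * pd 1 phi p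
       + uinv22 a f p * pd 1 phi p * pd 1 phi p)).
Proof.
  intros Hs Hp Hd Hsig.
  pose proof (exd_gK a f p Hs Hp Hd) as HG.
  cbv beta delta [laplacian gradsq hessian christoffel sum4].
  rewrite !(pd_confg s (gK a f) p Hsig HG).
  cbv beta iota delta [gK gKinv confginv].
  rewrite ?pd_ge2, ?pd_c.
  rewrite !(pd_uinv11 a f p _ Hs Hp Hd), !(pd_uinv12 a f p _ Hs Hp Hd),
          !(pd_uinv22 a f p _ Hs Hp Hd), !(pd_detH a f p _ Hs Hp).
  unfold uinv11, uinv12, uinv22.
  rewrite exp_Ropp.
  set (E := exp (2 * s p)).
  assert (HE : E <> 0) by (unfold E; apply Rgt_not_eq, exp_pos).
  unfold detH in *.
  set (A := u11 a f p). set (B := u12 a f p). set (C := u22 a f p).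
  set (A0 := pd 0 (fun q => u11 a f q) p). set (A1 := pd 1 (fun q => u11 a f q) p).
  set (B0 := pd 0 (fun q => u12 a f q) p). set (B1 := pd 1 (fun q => u12 a f q) p).
  set (C0 := pd 0 (fun q => u22 a f q) p). set (C1 := pd 1 (fun q => u22 a f q) p).
  field. split; auto.
Qed.

Definition Bf b c (q : pt) := b * tcoord q + c.
Definition Df b c d (q : pt) := d * b * tcoord q + d * c + 1.

Definition POS a b c d := forall p : pt, closedP a p ->
        0 < b * tcoord p + c /\ 0 < d * b * tcoord p + d * c + 1.

Lemma sig_d1 b c x y : 0 < b * (x + y) + c ->
  is_derive (fun s => sigma_ans b c (s, y)) x (- b / (b * (x + y) + c)).
Proof. intros H. unfold sigma_ans, tcoord; simpl. auto_derive. lra. field. lra. Qed.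
Lemma sig_d2 b c x y : 0 < b * (x + y) + c ->
  is_derive (fun s => sigma_ans b c (x, s)) y (- b / (b * (x + y) + c)).
Proof. intros H. unfold sigma_ans, tcoord; simpl. auto_derive. lra. field. lra. Qed.

Lemma phi_d1 m b c d x y : 0 < b * (x + y) + c -> 0 < d * b * (x + y) + d * c + 1 ->
  is_derive (fun s => phi_ans m b c d (s, y)) x
    (m * b / ((d * b * (x + y) + d * c + 1) * (b * (x + y) + c))).
Proof.
  intros H1 H2. unfold phi_ans, tcoord; simpl. auto_derive.
  - repeat split; try lra. apply Rdiv_lt_0_compat; lra.
  - field. lra.
Qed.
Lemma phi_d2 m b c d x y : 0 < b * (x + y) + c -> 0 < d * b * (x + y) + d * c + 1 ->
  is_derive (fun s => phi_ans m b c d (x, s)) y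
    (m * b / ((d * b * (x + y) + d * c + 1) * (b * (x + y) + c))).
Proof.
  intros H1 H2. unfold phi_ans, tcoord; simpl. auto_derive.
  - repeat split; try lra. apply Rdiv_lt_0_compat; lra.
  - field. lra.
Qed.

Lemma phi_dd m b c d x y : 0 < b * (x + y) + c -> 0 < d * b * (x + y) + d * c + 1 ->
  is_derive (fun s => m * b / ((d * b * (s + y) + d * c + 1) * (b * (s + y) + c))) x
    (- m * b^2 * (d * (b * (x + y) + c) + (d * b * (x + y) + d * c + 1))
       / ((d * b * (x + y) + d * c + 1) * (b * (x + y) + c))^2) /\
  is_derive (fun s => m * b / ((d * b * (x + s) + d * c + 1) * (b * (x + s) + c))) y
    (- m * b^2 * (d * (b * (x + y) + c) + (d * b * (x + y) + d * c + 1))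
       / ((d * b * (x + y) + d * c + 1) * (b * (x + y) + c))^2).
Proof.
  intros H1 H2. assert (H3 : (d * b * (x + y) + d * c + 1) * (b * (x + y) + c) <> 0)
   by (apply Rgt_not_eq, Rmult_lt_0_compat; lra).
  split; auto_derive; auto; field; lra.
Qed.

Definition SWu a f (p : pt) := uinv11 a f p + 2 * uinv12 a f p + uinv22 a f p.
Definition Su a f (p : pt) := pd 0 (fun q => uinv11 a f q) p + pd 1 (fun q => uinv12 a f q) p
   + pd 0 (fun q => uinv12 a f q) p + pd 1 (fun q => uinv22 a f q) p.

Lemma pd_phi1 a m b c d q : POS a b c d -> inP a q ->
  pd 0 (phi_ans m b c d) q = m * b / (Df b c d q * Bf b c q) /\
  pd 1 (phi_ans m b c d) q = m * b / (Df b c d q * Bf b c q).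
Proof.
  intros Hpos Hq. destruct q as [x y].
  destruct (Hpos _ (inP_closed _ _ Hq)) as [H1 H2]. unfold tcoord in *; simpl in *.
  unfold Df, Bf, tcoord; simpl. split; simpl; unfold d1, d2; simpl; apply is_derive_unique.
  apply phi_d1; auto. apply phi_d2; auto.
Qed.

Lemma intA a f m b c d mu p : SM (closedP a) f -> inP a p -> 0 < detH a f p ->
  POS a b c d -> 0 < m ->
  1 - / m * (laplacian (confg (sigma_ans b c) (gK a f))
                             (confginv (sigma_ans b c) (gKinv a f)) (phi_ans m b c d) p
                   - gradsq (confginv (sigma_ans b c) (gKinv a f)) (phi_ans m b c d) p)
        = mu * exp (2 * phi_ans m b c d p / m) ->
  Df b c d p ^ 2 + (b^2 * (d * Bf b c p + Df b c d p) + 2 * b^2 * Df b c d p + m * b^2) * SWu a f p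
  - b * Df b c d p * Bf b c p * Su a f p - mu * Bf b c p ^ 2 = 0.
Proof.
  intros Hs Hp Hd Hpos Hm Heq.
  destruct p as [x y].
  destruct (Hpos _ (inP_closed _ _ Hp)) as [HB HD]. unfold tcoord in HB, HD; simpl in HB, HD.
  assert (Hsig : exd (sigma_ans b c) (x, y)).
  { split; simpl; eexists; [apply sig_d1 | apply sig_d2]; auto. }
  rewrite (lapA a f (sigma_ans b c) (phi_ans m b c d) (x, y) Hs Hp (Rgt_not_eq _ _ Hd) Hsig) in Heq.
  assert (S0 : pd 0 (sigma_ans b c) (x, y) = - b / (b * (x + y) + c)).
  { simpl; unfold d1; simpl; apply is_derive_unique, sig_d1; auto. }
  assert (S1 : pd 1 (sigma_ans b c) (x, y) = - b / (b * (x + y) + c)).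
  { simpl; unfold d2; simpl; apply is_derive_unique, sig_d2; auto. }
  destruct (pd_phi1 a m b c d (x, y) Hpos Hp) as [P0 P1].
  assert (Hext : forall q, inP a q -> pd 0 (phi_ans m b c d) q = m * b / (Df b c d q * Bf b c q)
           /\ pd 1 (phi_ans m b c d) q = m * b / (Df b c d q * Bf b c q)).
  { intros q Hq; apply (pd_phi1 a); auto. }
  destruct (phi_dd m b c d x y HB HD) as [Q1 Q2].
  assert (P00 : pd 0 (pd 0 (phi_ans m b c d)) (x, y) =
     - m * b^2 * (d * (b * (x + y) + c) + (d * b * (x + y) + d * c + 1))
       / ((d * b * (x + y) + d * c + 1) * (b * (x + y) + c))^2).
  { change (pd 0 (pd 0 (phi_ans m b c d)) (x, y)) with (d1 (pd 0 (phi_ans m b c d)) (x, y)).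
    rewrite (d1_ext a _ (fun q => m * b / (Df b c d q * Bf b c q)) _ Hp).
    2:{ intros q Hq; apply (Hext q Hq). }
    unfold d1; simpl. apply is_derive_unique. exact Q1. }
  assert (P10 : pd 1 (pd 0 (phi_ans m b c d)) (x, y) =
     - m * b^2 * (d * (b * (x + y) + c) + (d * b * (x + y) + d * c + 1))
       / ((d * b * (x + y) + d * c + 1) * (b * (x + y) + c))^2).
  { change (pd 1 (pd 0 (phi_ans m b c d)) (x, y)) with (d2 (pd 0 (phi_ans m b c d)) (x, y)).
    rewrite (d2_ext a _ (fun q => m * b / (Df b c d q * Bf b c q)) _ Hp).
    2:{ intros q Hq; apply (Hext q Hq). }
    unfold d2; simpl. apply is_derive_unique. exact Q2. }
  assert (P01 : pd 0 (pd 1 (phi_ans m b c d)) (x, y) =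
     - m * b^2 * (d * (b * (x + y) + c) + (d * b * (x + y) + d * c + 1))
       / ((d * b * (x + y) + d * c + 1) * (b * (x + y) + c))^2).
  { change (pd 0 (pd 1 (phi_ans m b c d)) (x, y)) with (d1 (pd 1 (phi_ans m b c d)) (x, y)).
    rewrite (d1_ext a _ (fun q => m * b / (Df b c d q * Bf b c q)) _ Hp).
    2:{ intros q Hq; apply (Hext q Hq). }
    unfold d1; simpl. apply is_derive_unique. exact Q1. }
  assert (P11 : pd 1 (pd 1 (phi_ans m b c d)) (x, y) =
     - m * b^2 * (d * (b * (x + y) + c) + (d * b * (x + y) + d * c + 1))
       / ((d * b * (x + y) + d * c + 1) * (b * (x + y) + c))^2).
  { change (pd 1 (pd 1 (phi_ans m b c d)) (x, y)) with (d2 (pd 1 (phi_ans m b c d)) (x, y)).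
    rewrite (d2_ext a _ (fun q => m * b / (Df b c d q * Bf b c q)) _ Hp).
    2:{ intros q Hq; apply (Hext q Hq). }
    unfold d2; simpl. apply is_derive_unique. exact Q2. }
  rewrite S0, S1, P0, P1, P00, P01, P10, P11 in Heq.
  assert (E1 : exp (- (2 * sigma_ans b c (x, y))) = (b * (x + y) + c) ^ 2).
  { unfold sigma_ans, tcoord; simpl.
    replace (- (2 * - ln (b * (x + y) + c))) with (ln (b * (x + y) + c) + ln (b * (x + y) + c)) by ring.
    rewrite exp_plus, exp_ln; auto. ring. }
  assert (E2 : exp (2 * phi_ans m b c d (x, y) / m) =
      (b * (x + y) + c) ^ 2 / (d * b * (x + y) + d * c + 1) ^ 2).
  { unfold phi_ans, tcoord; simpl.
    replace (2 * (- m * ln ((d * b * (x + y) + d * c + 1) / (b * (x + y) + c))) / m)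
      with (- (ln ((d * b * (x + y) + d * c + 1) / (b * (x + y) + c))
             + ln ((d * b * (x + y) + d * c + 1) / (b * (x + y) + c)))) by (field; lra).
    rewrite exp_Ropp, exp_plus, exp_ln. field; lra. apply Rdiv_lt_0_compat; lra. }
  rewrite E1 in Heq. rewrite E2 in Heq.
  unfold SWu, Su, Df, Bf, tcoord in *; cbn [fst snd] in *.
  set (W11 := uinv11 a f (x, y)) in *. set (W12 := uinv12 a f (x, y)) in *.
  set (W22 := uinv22 a f (x, y)) in *.
  set (S11 := pd 0 (fun q => uinv11 a f q) (x, y)) in *.
  set (S12 := pd 1 (fun q => uinv12 a f q) (x, y)) in *.
  set (S21 := pd 0 (fun q => uinv12 a f q) (x, y)) in *.
  set (S22 := pd 1 (fun q => uinv22 a f q) (x, y)) in *.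
  set (BB := b * (x + y) + c) in *. set (DD := d * b * (x + y) + d * c + 1) in *.
  assert (HDD : DD = d * BB + 1) by (unfold DD, BB; ring).
  clearbody W11 W12 W22 S11 S12 S21 S22 BB DD.
  subst DD.
  match type of Heq with ?L = ?Rr =>
    transitivity ((d * BB + 1) ^ 2 * (L - Rr));
    [ field; repeat split; lra | rewrite Heq; ring ] end.
Qed.

Definition P11e a f (q : pt) := /2 * (l1 q * l3 a q * l4 a q * l5 a q + l1 q * l2 q * l3 a q * l5 a q
   + l1 q * l2 q * l3 a q * l4 a q + lprod a q * F22 f q).
Definition P12e a f (q : pt) := - /2 * (l1 q * l2 q * l3 a q * l4 a q + lprod a q * F12 f q).
Definition P22e a f (q : pt) := /2 * (l2 q * l3 a q * l4 a q * l5 a q + l1 q * l2 q * l4 a q * l5 a q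
   + l1 q * l2 q * l3 a q * l4 a q + lprod a q * F11 f q).

Definition dPi1 a (q : pt) := l2 q * l3 a q * l4 a q * l5 a q - l1 q * l2 q * l4 a q * l5 a q
   - l1 q * l2 q * l3 a q * l4 a q.
Definition dPi2 a (q : pt) := l1 q * l3 a q * l4 a q * l5 a q - l1 q * l2 q * l3 a q * l5 a q
   - l1 q * l2 q * l3 a q * l4 a q.

Definition dP11 a f (q : pt) := /2 * (
    (l3 a q * l4 a q * l5 a q - l1 q * l4 a q * l5 a q - l1 q * l3 a q * l4 a q)
  + (l2 q * l3 a q * l5 a q - l1 q * l2 q * l5 a q - l1 q * l2 q * l3 a q)
  + (l2 q * l3 a q * l4 a q - l1 q * l2 q * l4 a q)
  + (dPi1 a q * F22 f q + lprod a q * iter_pd [true; false; false] f q)).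
Definition dP12_1 a f (q : pt) := - /2 * (
    (l2 q * l3 a q * l4 a q - l1 q * l2 q * l4 a q)
  + (dPi1 a q * F12 f q + lprod a q * iter_pd [true; true; false] f q)).
Definition dP12_2 a f (q : pt) := - /2 * (
    (l1 q * l3 a q * l4 a q - l1 q * l2 q * l3 a q)
  + (dPi2 a q * F12 f q + lprod a q * iter_pd [false; true; false] f q)).
Definition dP22 a f (q : pt) := /2 * (
    (l3 a q * l4 a q * l5 a q - l2 q * l3 a q * l5 a q - l2 q * l3 a q * l4 a q)
  + (l1 q * l4 a q * l5 a q - l1 q * l2 q * l5 a q - l1 q * l2 q * l4 a q)
  + (l1 q * l3 a q * l4 a q - l1 q * l2 q * l3 a q)
  + (dPi2 a q * F11 f q + lprod a q * iter_pd [false; true; true] f q)).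

Lemma is_derive_hsp (E Pi H : R -> R) x dE dPi :
  is_derive E x dE -> is_derive Pi x dPi -> ex_derive H x ->
  is_derive (fun s => /2 * (E s + Pi s * H s)) x (/2 * (dE + (dPi * H x + Pi x * Derive H x))).
Proof.
  intros HE HP HH.
  pose proof (is_derive_mult Pi H x dPi (Derive H x) HP (Derive_correct _ _ HH)
     (fun t1 t2 => Rmult_comm t1 t2)) as H1.
  pose proof (is_derive_plus E _ x dE _ HE H1) as H2.
  exact (is_derive_scal _ x (/2) _ H2).
Qed.
Lemma is_derive_mhsp (E Pi H : R -> R) x dE dPi :
  is_derive E x dE -> is_derive Pi x dPi -> ex_derive H x ->
  is_derive (fun s => - /2 * (E s + Pi s * H s)) x (- /2 * (dE + (dPi * H x + Pi x * Derive H x))).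
Proof.
  intros HE HP HH.
  pose proof (is_derive_mult Pi H x dPi (Derive H x) HP (Derive_correct _ _ HH)
     (fun t1 t2 => Rmult_comm t1 t2)) as H1.
  pose proof (is_derive_plus E _ x dE _ HE H1) as H2.
  exact (is_derive_scal _ x (- /2) _ H2).
Qed.

Ltac unl := unfold lprod, dPi1, dPi2, l1, l2, l3, l4, l5; cbn [fst snd].

Lemma dP11_ok (K : pt -> Prop) a f x y : SM K f -> K (x, y) ->
  is_derive (fun s => P11e a f (s, y)) x (dP11 a f (x, y)).
Proof.
  intros Hs Hc. unfold P11e, dP11, F22.
  apply (is_derive_ext (fun s => /2 * (((1+s)*(a-1-s)*(a-1-y)*(a-1-s-y) + (1+s)*(1+y)*(a-1-s)*(a-1-s-y)
     + (1+s)*(1+y)*(a-1-s)*(a-1-y)) + ((1+s)*(1+y)*(a-1-s)*(a-1-y)*(a-1-s-y)) * iter_pd [false; false] f (s, y)))).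
  { intros t; unl; match goal with |- ?A = ?B => change (@eq R A B) end; ring. }
  match goal with |- is_derive _ _ ?V => replace V with (/2 * ((((a-1-x)*(a-1-y)*(a-1-x-y) - (1+x)*(a-1-y)*(a-1-x-y) - (1+x)*(a-1-x)*(a-1-y))
      + ((1+y)*(a-1-x)*(a-1-x-y) - (1+x)*(1+y)*(a-1-x-y) - (1+x)*(1+y)*(a-1-x))
      + ((1+y)*(a-1-x)*(a-1-y) - (1+x)*(1+y)*(a-1-y)))
     + (((1+y)*(a-1-x)*(a-1-y)*(a-1-x-y) - (1+x)*(1+y)*(a-1-y)*(a-1-x-y) - (1+x)*(1+y)*(a-1-x)*(a-1-y))
         * iter_pd [false; false] f (x, y)
        + ((1+x)*(1+y)*(a-1-x)*(a-1-y)*(a-1-x-y)) * iter_pd [true; false; false] f (x, y))))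
   by (unl; ring) end.
  apply is_derive_hsp.
  - auto_derive; auto; ring.
  - auto_derive; auto; ring.
  - apply (SM_ex1 _ f _ x y Hs Hc).
Qed.

Lemma dP12_1_ok (K : pt -> Prop) a f x y : SM K f -> K (x, y) ->
  is_derive (fun s => P12e a f (s, y)) x (dP12_1 a f (x, y)).
Proof.
  intros Hs Hc. unfold P12e, dP12_1, F12.
  apply (is_derive_ext (fun s => - /2 * (((1+s)*(1+y)*(a-1-s)*(a-1-y))
     + ((1+s)*(1+y)*(a-1-s)*(a-1-y)*(a-1-s-y)) * iter_pd [true; false] f (s, y)))).
  { intros t; unl; match goal with |- ?A = ?B => change (@eq R A B) end; ring. }
  match goal with |- is_derive _ _ ?V => replace V with
   (- /2 * (((1+y)*(a-1-x)*(a-1-y) - (1+x)*(1+y)*(a-1-y))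
     + (((1+y)*(a-1-x)*(a-1-y)*(a-1-x-y) - (1+x)*(1+y)*(a-1-y)*(a-1-x-y) - (1+x)*(1+y)*(a-1-x)*(a-1-y))
         * iter_pd [true; false] f (x, y)
        + ((1+x)*(1+y)*(a-1-x)*(a-1-y)*(a-1-x-y)) * iter_pd [true; true; false] f (x, y))))
   by (unl; ring) end.
  apply is_derive_mhsp.
  - auto_derive; auto; ring.
  - auto_derive; auto; ring.
  - apply (SM_ex1 _ f _ x y Hs Hc).
Qed.

Lemma dP12_2_ok (K : pt -> Prop) a f x y : SM K f -> K (x, y) ->
  is_derive (fun s => P12e a f (x, s)) y (dP12_2 a f (x, y)).
Proof.
  intros Hs Hc. unfold P12e, dP12_2, F12.
  apply (is_derive_ext (fun s => - /2 * (((1+x)*(1+s)*(a-1-x)*(a-1-s))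
     + ((1+x)*(1+s)*(a-1-x)*(a-1-s)*(a-1-x-s)) * iter_pd [true; false] f (x, s)))).
  { intros t; unl; match goal with |- ?A = ?B => change (@eq R A B) end; ring. }
  match goal with |- is_derive _ _ ?V => replace V with
   (- /2 * (((1+x)*(a-1-x)*(a-1-y) - (1+x)*(1+y)*(a-1-x))
     + (((1+x)*(a-1-x)*(a-1-y)*(a-1-x-y) - (1+x)*(1+y)*(a-1-x)*(a-1-x-y) - (1+x)*(1+y)*(a-1-x)*(a-1-y))
         * iter_pd [true; false] f (x, y)
        + ((1+x)*(1+y)*(a-1-x)*(a-1-y)*(a-1-x-y)) * iter_pd [false; true; false] f (x, y))))
   by (unl; ring) end.
  apply is_derive_mhsp.
  - auto_derive; auto; ring.
  - auto_derive; auto; ring.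
  - apply (SM_ex2 _ f _ x y Hs Hc).
Qed.

Lemma dP22_ok (K : pt -> Prop) a f x y : SM K f -> K (x, y) ->
  is_derive (fun s => P22e a f (x, s)) y (dP22 a f (x, y)).
Proof.
  intros Hs Hc. unfold P22e, dP22, F11.
  apply (is_derive_ext (fun s => /2 * (((1+s)*(a-1-x)*(a-1-s)*(a-1-x-s) + (1+x)*(1+s)*(a-1-s)*(a-1-x-s)
     + (1+x)*(1+s)*(a-1-x)*(a-1-s)) + ((1+x)*(1+s)*(a-1-x)*(a-1-s)*(a-1-x-s)) * iter_pd [true; true] f (x, s)))).
  { intros t; unl; match goal with |- ?A = ?B => change (@eq R A B) end; ring. }
  match goal with |- is_derive _ _ ?V => replace V with
   (/2 * ((((a-1-x)*(a-1-y)*(a-1-x-y) - (1+y)*(a-1-x)*(a-1-x-y) - (1+y)*(a-1-x)*(a-1-y))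
      + ((1+x)*(a-1-y)*(a-1-x-y) - (1+x)*(1+y)*(a-1-x-y) - (1+x)*(1+y)*(a-1-y))
      + ((1+x)*(a-1-x)*(a-1-y) - (1+x)*(1+y)*(a-1-x)))
     + (((1+x)*(a-1-x)*(a-1-y)*(a-1-x-y) - (1+x)*(1+y)*(a-1-x)*(a-1-x-y) - (1+x)*(1+y)*(a-1-x)*(a-1-y))
         * iter_pd [true; true] f (x, y)
        + ((1+x)*(1+y)*(a-1-x)*(a-1-y)*(a-1-x-y)) * iter_pd [false; true; true] f (x, y))))
   by (unl; ring) end.
  apply is_derive_hsp.
  - auto_derive; auto; ring.
  - auto_derive; auto; ring.
  - apply (SM_ex2 _ f _ x y Hs Hc).
Qed.

Definition DEL a f (dl : pt -> R) :=
  SM (closedP a) dl /\ (forall p, closedP a p -> 0 < dl p) /\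
  (forall p, inP a p -> detH a f p * (dl p * lprod a p) = 1).

Definition SWe a f (dl : pt -> R) (q : pt) := dl q * (P11e a f q + 2 * P12e a f q + P22e a f q).
Definition Se a f (dl : pt -> R) (q : pt) :=
  (iter_pd [true] dl q * P11e a f q + dl q * dP11 a f q)
  + (iter_pd [false] dl q * P12e a f q + dl q * dP12_2 a f q)
  + (iter_pd [true] dl q * P12e a f q + dl q * dP12_1 a f q)
  + (iter_pd [false] dl q * P22e a f q + dl q * dP22 a f q).
Definition Qe a f (q : pt) := /4 * (
    l5 a q * (l1 q + l3 a q) * (l2 q + l4 a q)
  + l2 q * l4 a q * (l1 q + l3 a q) * (1 + l5 a q * F22 f q)
  + l1 q * l3 a q * (l2 q + l4 a q) * (1 + l5 a q * F11 f q)
  + l1 q * l2 q * l3 a q * l4 a q * (F11 f q + F22 f q - 2 * F12 f q)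
  + lprod a q * (F11 f q * F22 f q - F12 f q * F12 f q)).

Lemma inP_l a q : inP a q -> l1 q <> 0 /\ l2 q <> 0 /\ l3 a q <> 0 /\ l4 a q <> 0 /\ l5 a q <> 0.
Proof. unfold inP; intros; repeat split; lra. Qed.

Lemma detH_e a f q : SM (closedP a) f -> inP a q -> detH a f q = u11e a f q * u22e a f q - u12e a f q * u12e a f q.
Proof. intros; unfold detH; rewrite u11_int, u12_int, u22_int; auto. Qed.

Lemma Qe_ok a f q : SM (closedP a) f -> inP a q -> lprod a q * detH a f q = Qe a f q.
Proof.
  intros Hs Hq. rewrite detH_e; auto. destruct (inP_l a q Hq) as (H1 & H2 & H3 & H4 & H5).
  unfold Qe, u11e, u12e, u22e, lprod. field. repeat split; auto.
Qed.

Lemma uinv_e a f dl q : SM (closedP a) f -> DEL a f dl -> inP a q ->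
  uinv11 a f q = dl q * P11e a f q /\ uinv12 a f q = dl q * P12e a f q /\
  uinv22 a f q = dl q * P22e a f q.
Proof.
  intros Hs (Hd1 & Hd2 & Hd3) Hq.
  pose proof (Hd3 q Hq) as Hdet.
  destruct (inP_l a q Hq) as (H1 & H2 & H3 & H4 & H5).
  assert (Hdp : dl q <> 0) by (apply Rgt_not_eq, Hd2, inP_closed; auto).
  assert (HD : detH a f q = / (dl q * lprod a q)).
  { assert (Hl : dl q * lprod a q <> 0) by (unfold lprod; repeat apply Rmult_integral_contrapositive_currified; auto).
    apply (Rmult_eq_reg_r (dl q * lprod a q)). 2: exact Hl. rewrite Hdet. field. split; intro Hz; apply Hl; rewrite Hz; ring. }
  unfold uinv11, uinv12, uinv22. rewrite HD, u11_int, u12_int, u22_int; auto.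
  unfold P11e, P12e, P22e, u11e, u12e, u22e, lprod.
  repeat split; field; repeat split; auto.
Qed.

Lemma SWu_e a f dl p : SM (closedP a) f -> DEL a f dl -> inP a p -> SWu a f p = SWe a f dl p.
Proof.
  intros Hs Hd Hp. destruct (uinv_e a f dl p Hs Hd Hp) as (E1 & E2 & E3).
  unfold SWu, SWe. rewrite E1, E2, E3. ring.
Qed.

Lemma d1_mult_e (dl P : pt -> R) dP x y :
  ex_derive (fun s => dl (s, y)) x -> is_derive (fun s => P (s, y)) x dP ->
  d1 (fun q => dl q * P q) (x, y) = iter_pd [true] dl (x, y) * P (x, y) + dl (x, y) * dP.
Proof.
  intros H1 H2. unfold d1; cbn [fst snd]. apply is_derive_unique.
  exact (is_derive_mult (fun s => dl (s, y)) (fun s => P (s, y)) x _ dP (Derive_correct _ _ H1) H2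
     (fun t1 t2 => Rmult_comm t1 t2)).
Qed.
Lemma d2_mult_e (dl P : pt -> R) dP x y :
  ex_derive (fun s => dl (x, s)) y -> is_derive (fun s => P (x, s)) y dP ->
  d2 (fun q => dl q * P q) (x, y) = iter_pd [false] dl (x, y) * P (x, y) + dl (x, y) * dP.
Proof.
  intros H1 H2. unfold d2; cbn [fst snd]. apply is_derive_unique.
  exact (is_derive_mult (fun s => dl (x, s)) (fun s => P (x, s)) y _ dP (Derive_correct _ _ H1) H2
     (fun t1 t2 => Rmult_comm t1 t2)).
Qed.

Lemma Su_e a f dl p : SM (closedP a) f -> DEL a f dl -> inP a p -> Su a f p = Se a f dl p.
Proof.
  intros Hs Hd Hp. pose proof Hd as (Hd1 & Hd2 & Hd3).
  destruct p as [x y].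
  assert (Hc : closedP a (x, y)) by (apply inP_closed; auto).
  assert (Hext : forall q, inP a q -> uinv11 a f q = dl q * P11e a f q /\ uinv12 a f q = dl q * P12e a f q /\
     uinv22 a f q = dl q * P22e a f q) by (intros q Hq; exact (uinv_e a f dl q Hs Hd Hq)).
  pose proof (SM_ex1 _ dl [] x y Hd1 Hc) as X1.
  pose proof (SM_ex2 _ dl [] x y Hd1 Hc) as X2.
  assert (A1 : d1 (fun q => uinv11 a f q) (x, y) = iter_pd [true] dl (x, y) * P11e a f (x, y) + dl (x, y) * dP11 a f (x, y)).
  { transitivity (d1 (fun q => dl q * P11e a f q) (x, y)).
    { apply (d1_ext a); auto; intros q Hq; exact (proj1 (Hext q Hq)). }
    apply d1_mult_e; auto. apply (dP11_ok (closedP a)); auto. }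
  assert (A2 : d2 (fun q => uinv12 a f q) (x, y) = iter_pd [false] dl (x, y) * P12e a f (x, y) + dl (x, y) * dP12_2 a f (x, y)).
  { transitivity (d2 (fun q => dl q * P12e a f q) (x, y)).
    { apply (d2_ext a); auto; intros q Hq; exact (proj1 (proj2 (Hext q Hq))). }
    apply d2_mult_e; auto. apply (dP12_2_ok (closedP a)); auto. }
  assert (A3 : d1 (fun q => uinv12 a f q) (x, y) = iter_pd [true] dl (x, y) * P12e a f (x, y) + dl (x, y) * dP12_1 a f (x, y)).
  { transitivity (d1 (fun q => dl q * P12e a f q) (x, y)).
    { apply (d1_ext a); auto; intros q Hq; exact (proj1 (proj2 (Hext q Hq))). }
    apply d1_mult_e; auto. apply (dP12_1_ok (closedP a)); auto. }
  assert (A4 : d2 (fun q => uinv22 a f q) (x, y) = iter_pd [false] dl (x, y) * P22e a f (x, y) + dl (x, y) * dP22 a f (x, y)).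
  { transitivity (d2 (fun q => dl q * P22e a f q) (x, y)).
    { apply (d2_ext a); auto; intros q Hq; exact (proj2 (proj2 (Hext q Hq))). }
    apply d2_mult_e; auto. apply (dP22_ok (closedP a)); auto. }
  unfold Su, Se.
  change (pd 0 (fun q => uinv11 a f q) (x, y)) with (d1 (fun q => uinv11 a f q) (x, y)).
  change (pd 1 (fun q => uinv12 a f q) (x, y)) with (d2 (fun q => uinv12 a f q) (x, y)).
  change (pd 0 (fun q => uinv12 a f q) (x, y)) with (d1 (fun q => uinv12 a f q) (x, y)).
  change (pd 1 (fun q => uinv22 a f q) (x, y)) with (d2 (fun q => uinv22 a f q) (x, y)).
  rewrite A1, A2, A3, A4. reflexivity.
Qed.

Definition HeE a f m b c d mu (dl : pt -> R) (q : pt) :=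
  Df b c d q ^ 2 + (b^2 * (d * Bf b c q + Df b c d q) + 2 * b^2 * Df b c d q + m * b^2) * SWe a f dl q
  - b * Df b c d q * Bf b c q * Se a f dl q - mu * Bf b c q ^ 2.

Lemma cR_pow {U : UniformSpace} (F0 : U -> R) n x : continuous F0 x -> continuous (fun q => F0 q ^ n) x.
Proof.
  intros H. induction n as [|n IH]; simpl.
  - apply cR_const.
  - apply (cR_mult F0 (fun q => F0 q ^ n)); auto.
Qed.

Ltac ctac Hf Hd Hv :=
  repeat match goal with
  | |- continuous (fun q => @?A q + @?B q) _ => apply (cR_plus A B)
  | |- continuous (fun q => @?A q - @?B q) _ => apply (cR_minus A B)
  | |- continuous (fun q => @?A q * @?B q) _ => apply (cR_mult A B)
  | |- continuous (fun q => - @?A q) _ => apply (cR_opp A)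
  | |- continuous (fun q => @?A q ^ _) _ => apply (cR_pow A)
  | |- continuous (fun q => fst q) _ => apply cP_fst
  | |- continuous (fun q => snd q) _ => apply cP_snd
  | |- continuous (fun _ => _) _ => apply cR_const
  | |- continuous (fun q => iter_pd ?w ?g q) _ =>
      first [exact (SM_cont _ g w _ Hf Hv) | exact (SM_cont _ g w _ Hd Hv)]
  | |- continuous (fun q => ?g q) _ => exact (SM_cont _ g [] _ Hd Hv)
  end.

Lemma HeE_cont a f m b c d mu dl v : SM (closedP a) f -> SM (closedP a) dl -> closedP a v ->
  continuous (HeE a f m b c d mu dl) v.
Proof.
  intros Hf Hd Hv.
  unfold HeE, SWe, Se, Df, Bf, tcoord, P11e, P12e, P22e, dP11, dP12_1, dP12_2, dP22, dPi1, dPi2,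
    F11, F12, F22, lprod, l1, l2, l3, l4, l5.
  ctac Hf Hd Hv.
Qed.

Lemma Qe_cont a f dl v : SM (closedP a) f -> SM (closedP a) dl -> closedP a v ->
  continuous (fun q => dl q * Qe a f q - 1) v.
Proof.
  intros Hf Hd Hv.
  unfold Qe, F11, F12, F22, lprod, l1, l2, l3, l4, l5.
  ctac Hf Hd Hv.
Qed.

Lemma ballR_iff (x y e : R) : ball x e y <-> Rabs (y - x) < e.
Proof. unfold ball; simpl; unfold AbsRing_ball, abs, minus, plus, opp; simpl. tauto. Qed.

Lemma vert_lim a (G : pt -> R) (v w : pt) :
  continuous G v -> (forall q, inP a q -> G q = 0) ->
  (forall eta, 0 < eta <= 1/2 -> inP a (fst v + eta * fst w, snd v + eta * snd w)) ->
  Rabs (fst w) <= 1 -> Rabs (snd w) <= 1 -> G v = 0.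
Proof.
  intros Hc H0 Hin Hw1 Hw2.
  destruct (Req_dec (G v) 0) as [E|E]; auto. exfalso.
  assert (Hpos : 0 < Rabs (G v)) by (apply Rabs_pos_lt; auto).
  pose proof (Hc (ball (G v) (mkposreal _ Hpos)) (locally_ball _ _)) as [r Hr].
  set (eta := Rmin (r / 2) (1/2)).
  assert (He1 : 0 < eta) by (unfold eta; apply Rmin_pos; [pose proof (cond_pos r)|]; lra).
  assert (He2 : eta <= r / 2) by apply Rmin_l.
  assert (He3 : eta <= 1 / 2) by apply Rmin_r.
  pose proof (cond_pos r) as Hr0.
  specialize (Hr (fst v + eta * fst w, snd v + eta * snd w)).
  assert (Hb : ball v r (fst v + eta * fst w, snd v + eta * snd w)).
  { destruct v as [v1 v2]; destruct w as [w1 w2]; simpl in *; split; simpl; apply ballR_iff.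
    - replace (v1 + eta * w1 - v1) with (eta * w1) by ring.
      rewrite Rabs_mult, (Rabs_pos_eq eta) by lra. nra.
    - replace (v2 + eta * w2 - v2) with (eta * w2) by ring.
      rewrite Rabs_mult, (Rabs_pos_eq eta) by lra. nra. }
  specialize (Hr Hb).
  rewrite (H0 _ (Hin eta (conj He1 He3))) in Hr.
  pose proof (proj1 (ballR_iff _ _ _) Hr) as Hr'. simpl in Hr'.
  replace (0 - G v) with (- G v) in Hr' by ring. rewrite Rabs_Ropp in Hr'. lra.
Qed.

Definition MUEQ a f m b c d mu := forall p : pt, inP a p ->
        1 - / m * (laplacian (confg (sigma_ans b c) (gK a f))
                             (confginv (sigma_ans b c) (gKinv a f)) (phi_ans m b c d) p
                   - gradsq (confginv (sigma_ans b c) (gKinv a f)) (phi_ans m b c d) p)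
        = mu * exp (2 * phi_ans m b c d p / m).

Lemma HeE_int a f m b c d mu dl p : SM (closedP a) f -> DEL a f dl ->
  (forall p, inP a p -> 0 < u11 a f p /\ 0 < detH a f p) ->
  POS a b c d -> 0 < m -> MUEQ a f m b c d mu -> inP a p ->
  HeE a f m b c d mu dl p = 0.
Proof.
  intros Hs Hd Hpd Hpos Hm Hmu Hp.
  pose proof (intA a f m b c d mu p Hs Hp (proj2 (Hpd p Hp)) Hpos Hm (Hmu p Hp)) as H.
  unfold HeE. rewrite <- (SWu_e a f dl p Hs Hd Hp), <- (Su_e a f dl p Hs Hd Hp). exact H.
Qed.

Lemma Qe_int a f dl p : SM (closedP a) f -> DEL a f dl -> inP a p -> dl p * Qe a f p - 1 = 0.
Proof.
  intros Hs (Hd1 & Hd2 & Hd3) Hp. rewrite <- (Qe_ok a f p Hs Hp).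
  pose proof (Hd3 p Hp). lra.
Qed.

Lemma vertex1 a f m b c d mu dl : 1 < a -> SM (closedP a) f -> DEL a f dl ->
  (forall p, inP a p -> 0 < u11 a f p /\ 0 < detH a f p) ->
  POS a b c d -> 0 < m -> MUEQ a f m b c d mu ->
  4 * b / ((c - 2 * b) * (d * c + 1 - 2 * d * b))
      = 1 / (c - 2 * b) ^ 2 - mu / (d * c + 1 - 2 * d * b) ^ 2.
Proof.
  intros Ha Hs Hd Hpd Hpos Hm Hmu.
  pose proof Hd as (Hd1 & Hd2 & Hd3).
  set (v := (-1, -1) : pt).
  assert (Hv : closedP a v) by (unfold v, closedP, l1, l2, l3, l4, l5; simpl; lra).
  assert (Hin : forall eta, 0 < eta <= 1/2 -> inP a (fst v + eta * fst (1, 1), snd v + eta * snd (1, 1))).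
  { intros eta He; unfold v, inP, l1, l2, l3, l4, l5; simpl; lra. }
  assert (E1 : HeE a f m b c d mu dl v = 0).
  { apply (vert_lim a _ v (1, 1)); auto.
    - apply HeE_cont; auto.
    - intros q Hq; apply (HeE_int a f m b c d mu dl q); auto.
    - simpl; unfold Rabs; destruct (Rcase_abs _); lra.
    - simpl; unfold Rabs; destruct (Rcase_abs _); lra. }
  assert (E2 : dl v * Qe a f v - 1 = 0).
  { apply (vert_lim a (fun q => dl q * Qe a f q - 1) v (1, 1)); auto.
    - apply Qe_cont; auto.
    - intros q Hq; apply Qe_int; auto.
    - simpl; unfold Rabs; destruct (Rcase_abs _); lra.
    - simpl; unfold Rabs; destruct (Rcase_abs _); lra. }
  destruct (Hpos v Hv) as [HB HD]. unfold v, tcoord in HB, HD; simpl in HB, HD.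
  unfold HeE, SWe, Se, Df, Bf, tcoord, P11e, P12e, P22e, dP11, dP12_1, dP12_2, dP22, dPi1, dPi2,
    lprod, l1, l2, l3, l4, l5 in E1.
  unfold Qe, lprod, l1, l2, l3, l4, l5 in E2.
  unfold v in E1, E2; cbn [fst snd] in E1, E2.
  assert (Hdl : dl (-1, -1) * ((a + 1) * a ^ 2) = 4).
  { match type of E2 with ?L - 1 = 0 => replace (dl (-1, -1) * ((a + 1) * a ^ 2)) with (4 * L) by field end.
    lra. }
  match type of E1 with ?L = 0 =>
    replace L with ((d * c + 1 - 2 * d * b) ^ 2 - b * (d * c + 1 - 2 * d * b) * (c - 2 * b) *
       (dl (-1, -1) * ((a + 1) * a ^ 2))
                     - mu * (c - 2 * b) ^ 2) in E1 by field end.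
  rewrite Hdl in E1.
  assert (HB' : 0 < c - 2 * b) by lra. assert (HD' : 0 < d * c + 1 - 2 * d * b) by lra.
  clear HB HD.
  set (BB := c - 2 * b) in *. set (DD := d * c + 1 - 2 * d * b) in *.
  apply (Rmult_eq_reg_l (BB ^ 2 * DD ^ 2)).
  2: { apply Rgt_not_eq; apply Rmult_lt_0_compat; apply pow_lt; lra. }
  transitivity (4 * b * BB * DD). field. split; lra.
  transitivity (DD ^ 2 - mu * BB ^ 2). 2: field; split; lra.
  lra.
Qed.

Lemma vertex2 a f m b c d mu dl : 1 < a -> SM (closedP a) f -> DEL a f dl ->
  (forall p, inP a p -> 0 < u11 a f p /\ 0 < detH a f p) ->
  POS a b c d -> 0 < m -> MUEQ a f m b c d mu ->
  0 = 1 / (c + (a - 2) * b) ^ 2 - mu / (d * c + 1 + (a - 2) * d * b) ^ 2.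
Proof.
  intros Ha Hs Hd Hpd Hpos Hm Hmu.
  pose proof Hd as (Hd1 & Hd2 & Hd3).
  set (v := (-1, a - 1) : pt).
  assert (Hv : closedP a v) by (unfold v, closedP, l1, l2, l3, l4, l5; simpl; lra).
  assert (Hin : forall eta, 0 < eta <= 1/2 -> inP a (fst v + eta * fst (1, -1), snd v + eta * snd (1, -1))).
  { intros eta He; unfold v, inP, l1, l2, l3, l4, l5; simpl; lra. }
  assert (E1 : HeE a f m b c d mu dl v = 0).
  { apply (vert_lim a _ v (1, -1)); auto.
    - apply HeE_cont; auto.
    - intros q Hq; apply (HeE_int a f m b c d mu dl q); auto.
    - simpl; unfold Rabs; destruct (Rcase_abs _); lra.
    - simpl; unfold Rabs; destruct (Rcase_abs _); lra. }
  destruct (Hpos v Hv) as [HB HD]. unfold v, tcoord in HB, HD; simpl in HB, HD.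
  unfold HeE, SWe, Se, Df, Bf, tcoord, P11e, P12e, P22e, dP11, dP12_1, dP12_2, dP22, dPi1, dPi2,
    lprod, l1, l2, l3, l4, l5 in E1.
  unfold v in E1; cbn [fst snd] in E1.
  match type of E1 with ?L = 0 =>
    replace L with ((d * c + 1 + (a - 2) * d * b) ^ 2 - mu * (c + (a - 2) * b) ^ 2) in E1 by field end.
  assert (HB' : 0 < c + (a - 2) * b) by lra. assert (HD' : 0 < d * c + 1 + (a - 2) * d * b) by lra.
  clear HB HD.
  set (BB := c + (a - 2) * b) in *. set (DD := d * c + 1 + (a - 2) * d * b) in *.
  apply (Rmult_eq_reg_l (BB ^ 2 * DD ^ 2)).
  2: { apply Rgt_not_eq; apply Rmult_lt_0_compat; apply pow_lt; lra. }
  transitivity (DD ^ 2 - mu * BB ^ 2). 2: field; split; lra.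
  lra.
Qed.

Lemma vertex3 a f m b c d mu dl : 1 < a -> SM (closedP a) f -> DEL a f dl ->
  (forall p, inP a p -> 0 < u11 a f p /\ 0 < detH a f p) ->
  POS a b c d -> 0 < m -> MUEQ a f m b c d mu ->
  - 2 * b / ((c + (a - 1) * b) * (d * c + 1 + (a - 1) * d * b))
      = 1 / (c + (a - 1) * b) ^ 2 - mu / (d * c + 1 + (a - 1) * d * b) ^ 2.
Proof.
  intros Ha Hs Hd Hpd Hpos Hm Hmu.
  pose proof Hd as (Hd1 & Hd2 & Hd3).
  set (v := (0, a - 1) : pt).
  assert (Hv : closedP a v) by (unfold v, closedP, l1, l2, l3, l4, l5; simpl; lra).
  assert (Hin : forall eta, 0 < eta <= 1/2 -> inP a (fst v + eta * fst (-1, -1), snd v + eta * snd (-1, -1))).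
  { intros eta He; unfold v, inP, l1, l2, l3, l4, l5; simpl; lra. }
  assert (E1 : HeE a f m b c d mu dl v = 0).
  { apply (vert_lim a _ v (-1, -1)); auto.
    - apply HeE_cont; auto.
    - intros q Hq; apply (HeE_int a f m b c d mu dl q); auto.
    - simpl; unfold Rabs; destruct (Rcase_abs _); lra.
    - simpl; unfold Rabs; destruct (Rcase_abs _); lra. }
  assert (E2 : dl v * Qe a f v - 1 = 0).
  { apply (vert_lim a (fun q => dl q * Qe a f q - 1) v (-1, -1)); auto.
    - apply Qe_cont; auto.
    - intros q Hq; apply Qe_int; auto.
    - simpl; unfold Rabs; destruct (Rcase_abs _); lra.
    - simpl; unfold Rabs; destruct (Rcase_abs _); lra. }
  destruct (Hpos v Hv) as [HB HD]. unfold v, tcoord in HB, HD; simpl in HB, HD.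
  unfold HeE, SWe, Se, Df, Bf, tcoord, P11e, P12e, P22e, dP11, dP12_1, dP12_2, dP22, dPi1, dPi2,
    lprod, l1, l2, l3, l4, l5 in E1.
  unfold Qe, lprod, l1, l2, l3, l4, l5 in E2.
  unfold v in E1, E2; cbn [fst snd] in E1, E2.
  assert (Hdl : dl (0, a - 1) * (a * (a - 1)) = 4).
  { match type of E2 with ?L - 1 = 0 => replace (dl (0, a - 1) * (a * (a - 1))) with (4 * L) by field end.
    lra. }
  match type of E1 with ?L = 0 =>
    replace L with ((d * c + 1 + (a - 1) * d * b) ^ 2 + b * (d * c + 1 + (a - 1) * d * b) * (c + (a - 1) * b) *
       (/2 * (dl (0, a - 1) * (a * (a - 1))))
                     - mu * (c + (a - 1) * b) ^ 2) in E1 by field end.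
  rewrite Hdl in E1.
  assert (HB' : 0 < c + (a - 1) * b) by lra. assert (HD' : 0 < d * c + 1 + (a - 1) * d * b) by lra.
  clear HB HD.
  set (BB := c + (a - 1) * b) in *. set (DD := d * c + 1 + (a - 1) * d * b) in *.
  apply (Rmult_eq_reg_l (BB ^ 2 * DD ^ 2)).
  2: { apply Rgt_not_eq; apply Rmult_lt_0_compat; apply pow_lt; lra. }
  transitivity (- 2 * b * BB * DD). field. split; lra.
  transitivity (DD ^ 2 - mu * BB ^ 2). 2: field; split; lra.
  lra.
Qed.

Definition CW (g : R -> R) lo hi := forall x0, lo <= x0 <= hi -> forall eps : posreal,
  exists delta : posreal, forall x, lo <= x <= hi -> Rabs (x - x0) < delta -> Rabs (g x - g x0) < eps.

Lemma c2d_cont_pt (G : R -> R -> R) x s : continuity_2d_pt G x s -> continuity_pt (fun t => G x t) s.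
Proof.
  intros H. apply continuity_pt_filterlim. intros P [e He].
  destruct (H e) as [dl Hd]. exists dl. intros y Hy. apply He.
  apply Hd. rewrite Rminus_eq_0, Rabs_R0. apply cond_pos. exact Hy.
Qed.

Lemma c2d_ex_RInt (G : R -> R -> R) x c d : c <= d -> (forall s, c <= s <= d -> continuity_2d_pt G x s) ->
  ex_RInt (fun s => G x s) c d.
Proof.
  intros Hcd H. apply (ex_RInt_continuous (V := R_CompleteNormedModule)). intros z Hz.
  rewrite Rmin_left, Rmax_right in Hz by lra.
  apply (proj1 (continuity_pt_filterlim _ _)), c2d_cont_pt, H; auto.
Qed.

Lemma PC (G : R -> R -> R) lo hi c d : lo <= hi -> c < d ->
  (forall x s, lo <= x <= hi -> c <= s <= d -> continuity_2d_pt G x s) ->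
  CW (fun x => RInt (fun s => G x s) c d) lo hi.
Proof.
  intros Hlh Hcd H x0 Hx0 eps.
  assert (He : 0 < eps / (2 * (d - c))) by (apply Rdiv_lt_0_compat; [apply cond_pos | lra]).
  destruct (uniform_continuity_2d G lo hi c d H (mkposreal _ He)) as [dl Hdl].
  exists dl. intros x Hx Hxx0.
  assert (E1 : ex_RInt (fun s => G x s) c d) by (apply c2d_ex_RInt; auto; lra).
  assert (E0 : ex_RInt (fun s => G x0 s) c d) by (apply c2d_ex_RInt; auto; lra).
  assert (HM : RInt (fun y => G x y + - G x0 y) c d = RInt (fun s => G x s) c d + - RInt (fun s => G x0 s) c d)
    by exact (RInt_minus _ _ c d E1 E0).
  replace (RInt (fun s => G x s) c d - RInt (fun s => G x0 s) c d)
    with (RInt (fun y => G x y + - G x0 y) c d) by (rewrite HM; match goal with |- ?A = ?B => change (@eq R A B) end; ring).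
  eapply Rle_lt_trans.
  - apply (abs_RInt_le_const _ c d (eps / (2 * (d - c)))). lra.
    + apply (ex_RInt_minus (fun s => G x s) (fun s => G x0 s)); auto.
    + intros t Ht. left. 
      pose proof (Hdl x0 t x t Hx0 Ht Hx Ht Hxx0) as Hu. simpl in Hu.
      replace (G x t + - G x0 t) with (G x t - G x0 t) by ring.
      rewrite Rminus_eq_0, Rabs_R0 in Hu. apply Hu. apply cond_pos.
  - replace ((d - c) * (eps / (2 * (d - c)))) with (eps / 2) by (field; lra).
    pose proof (cond_pos eps). lra.
Qed.

Definition clamp lo hi x := Rmax lo (Rmin hi x).

Lemma clamp_in lo hi x : lo <= hi -> lo <= clamp lo hi x <= hi.
Proof.
  intros H; unfold clamp. split. apply Rmax_l.
  apply Rmax_lub; auto. apply Rmin_l.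
Qed.
Lemma clamp_id lo hi x : lo <= x <= hi -> clamp lo hi x = x.
Proof. intros H; unfold clamp. rewrite Rmin_right by lra. rewrite Rmax_right by lra. auto. Qed.
Lemma clamp_lip lo hi x y : lo <= hi -> Rabs (clamp lo hi x - clamp lo hi y) <= Rabs (x - y).
Proof.
  intros H; unfold clamp, Rmax, Rmin.
  repeat destruct Rle_dec; unfold Rabs; repeat destruct Rcase_abs; lra.
Qed.

Lemma CW_clamp (g : R -> R) lo hi : lo <= hi -> CW g lo hi ->
  forall x, continuous (fun y => g (clamp lo hi y)) x.
Proof.
  intros Hlh Hg x. apply (proj1 (continuity_pt_filterlim _ _)).
  intros eps Heps.
  destruct (Hg (clamp lo hi x) (clamp_in lo hi x Hlh) (mkposreal _ Heps)) as [dl Hdl].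
  exists dl. split. apply cond_pos.
  intros y [_ Hy]. unfold R_dist in *. simpl in *.
  apply Hdl. apply clamp_in; auto.
  eapply Rle_lt_trans. apply clamp_lip; auto. exact Hy.
Qed.

Lemma FTCP (K J : R -> R) lo hi : lo < hi -> CW K lo hi -> CW J lo hi ->
  (forall x, lo < x < hi -> is_derive K x (J x)) -> RInt J lo hi = K hi - K lo.
Proof.
  intros Hlh HK HJ HD.
  set (Jt := fun y => J (clamp lo hi y)). set (Kt := fun y => K (clamp lo hi y)).
  assert (CJ : forall x, continuous Jt x) by (apply CW_clamp; auto; lra).
  assert (CK : forall x, continuous Kt x) by (apply CW_clamp; auto; lra).
  assert (EX : forall u v, ex_RInt Jt u v).
  { intros u v; apply (ex_RInt_continuous (V := R_CompleteNormedModule)); intros; apply CJ. }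
  assert (DPsi : forall y, is_derive (fun z => RInt Jt lo z) y (Jt y)).
  { intros y. apply (is_derive_RInt Jt (fun z => RInt Jt lo z) lo y).
    - apply filter_forall. intros z. apply (RInt_correct (V := R_CompleteNormedModule)), EX.
    - apply CJ. }
  set (Phi := fun z => RInt Jt lo z - Kt z).
  destruct (MVT_gen Phi lo hi (fun _ => 0)) as [c0 [Hc1 Hc2]].
  - intros x Hx. rewrite Rmin_left, Rmax_right in Hx by lra.
    unfold Phi. replace 0 with (Jt x - J x).
    2: { unfold Jt; rewrite clamp_id by lra; ring. }
    apply (is_derive_minus (fun z => RInt Jt lo z) Kt x). apply DPsi.
    apply (is_derive_ext_loc K Kt x (J x)).
    + apply locR. exists (mkposreal _ (Rmin_pos _ _ (Rgt_minus _ _ (proj1 Hx)) (Rgt_minus _ _ (proj2 Hx)))).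
      simpl; intros y Hy. unfold Kt. rewrite clamp_id; auto.
      pose proof (Rmin_l (x - lo) (hi - x)). pose proof (Rmin_r (x - lo) (hi - x)).
      apply Rabs_def2 in Hy. lra.
    + apply HD; lra.
  - intros x _. unfold Phi. apply continuity_pt_minus.
    + apply (proj2 (continuity_pt_filterlim _ _)). exact (ex_derive_continuous (K := R_AbsRing) (V := R_NormedModule) (fun z => RInt Jt lo z) x (ex_intro _ _ (DPsi x))).
    + apply (proj2 (continuity_pt_filterlim _ _)). apply CK.
  - unfold Phi in Hc2. rewrite RInt_point in Hc2.
    unfold Kt in Hc2. rewrite !clamp_id in Hc2 by lra.
    rewrite <- (RInt_ext Jt J lo hi).
    + simpl in Hc2. unfold zero in Hc2; simpl in Hc2. lra.
    + intros x Hx. rewrite Rmin_left, Rmax_right in Hx by lra. unfold Jt; rewrite clamp_id; auto; lra.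
Qed.

Definition Zf m b c d (q : pt) := b * exp ((m - 1) * ln (Df b c d q) - (m + 3) * ln (Bf b c q)).
Definition dZf m b c d (q : pt) := Zf m b c d q * ((m - 1) * d * b / Df b c d q - (m + 3) * b / Bf b c q).
Definition V1 a f m b c d (dl : pt -> R) (q : pt) := Zf m b c d q * (dl q * (P11e a f q + P12e a f q)).
Definition V2 a f m b c d (dl : pt -> R) (q : pt) := Zf m b c d q * (dl q * (P12e a f q + P22e a f q)).
Definition E1 a f m b c d (dl : pt -> R) (q : pt) :=
  dZf m b c d q * (dl q * (P11e a f q + P12e a f q))
  + Zf m b c d q * (iter_pd [true] dl q * (P11e a f q + P12e a f q) + dl q * (dP11 a f q + dP12_1 a f q)).
Definition E2 a f m b c d (dl : pt -> R) (q : pt) :=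
  dZf m b c d q * (dl q * (P12e a f q + P22e a f q))
  + Zf m b c d q * (iter_pd [false] dl q * (P12e a f q + P22e a f q) + dl q * (dP12_2 a f q + dP22 a f q)).

Definition OMG b c d (Uf Ud : pt -> Prop) (q : pt) :=
  Uf q /\ Ud q /\ 0 < Bf b c q /\ 0 < Df b c d q.

Lemma is_derive_m3 (A B C D : R -> R) x dA dB dC dD :
  is_derive A x dA -> is_derive B x dB -> is_derive C x dC -> is_derive D x dD ->
  is_derive (fun s => A s * (B s * (C s + D s))) x
    (dA * (B x * (C x + D x)) + A x * (dB * (C x + D x) + B x * (dC + dD))).
Proof.
  intros HA HB HC HD.
  pose proof (is_derive_plus C D x dC dD HC HD) as H1.
  pose proof (is_derive_mult B (fun s => C s + D s) x dB (dC + dD) HB H1 (fun t1 t2 => Rmult_comm t1 t2)) as H2.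
  pose proof (is_derive_mult A (fun s => B s * (C s + D s)) x dA _ HA H2 (fun t1 t2 => Rmult_comm t1 t2)) as H3.
  exact H3.
Qed.

Lemma Zf_d1 m b c d x y : 0 < b * (x + y) + c -> 0 < d * b * (x + y) + d * c + 1 ->
  is_derive (fun s => Zf m b c d (s, y)) x (dZf m b c d (x, y)).
Proof.
  intros H1 H2. unfold dZf, Zf, Df, Bf, tcoord; cbn [fst snd].
  auto_derive. repeat split; lra. unfold Rminus. field. lra.
Qed.
Lemma Zf_d2 m b c d x y : 0 < b * (x + y) + c -> 0 < d * b * (x + y) + d * c + 1 ->
  is_derive (fun s => Zf m b c d (x, s)) y (dZf m b c d (x, y)).
Proof.
  intros H1 H2. unfold dZf, Zf, Df, Bf, tcoord; cbn [fst snd].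
  auto_derive. repeat split; lra. unfold Rminus. field. lra.
Qed.

Lemma V1_d1 a f m b c d dl Uf Ud x y : smooth_on Uf f -> smooth_on Ud dl -> OMG b c d Uf Ud (x, y) ->
  is_derive (fun s => V1 a f m b c d dl (s, y)) x (E1 a f m b c d dl (x, y)).
Proof.
  intros Hf Hd (H1 & H2 & H3 & H4). unfold Bf, Df, tcoord in H3, H4; cbn [fst snd] in H3, H4.
  assert (Sf : SM Uf f) by (exists Uf; split; auto).
  assert (Sd : SM Ud dl) by (exists Ud; split; auto).
  unfold V1, E1.
  apply (is_derive_m3 (fun s => Zf m b c d (s, y)) (fun s => dl (s, y)) (fun s => P11e a f (s, y))
     (fun s => P12e a f (s, y))).
  - apply Zf_d1; auto.
  - apply (Derive_correct (fun s => dl (s, y))). apply (SM_ex1 Ud dl [] x y Sd H2).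
  - apply (dP11_ok Uf); auto.
  - apply (dP12_1_ok Uf); auto.
Qed.

Lemma V2_d2 a f m b c d dl Uf Ud x y : smooth_on Uf f -> smooth_on Ud dl -> OMG b c d Uf Ud (x, y) ->
  is_derive (fun s => V2 a f m b c d dl (x, s)) y (E2 a f m b c d dl (x, y)).
Proof.
  intros Hf Hd (H1 & H2 & H3 & H4). unfold Bf, Df, tcoord in H3, H4; cbn [fst snd] in H3, H4.
  assert (Sf : SM Uf f) by (exists Uf; split; auto).
  assert (Sd : SM Ud dl) by (exists Ud; split; auto).
  unfold V2, E2.
  apply (is_derive_m3 (fun s => Zf m b c d (x, s)) (fun s => dl (x, s)) (fun s => P12e a f (x, s))
     (fun s => P22e a f (x, s))).
  - apply Zf_d2; auto.
  - apply (Derive_correct (fun s => dl (x, s))). apply (SM_ex2 Ud dl [] x y Sd H2).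
  - apply (dP12_2_ok Uf); auto.
  - apply (dP22_ok Uf); auto.
Qed.

Definition Ig m b c d mu (q : pt) :=
  (exp (- phi_ans m b c d q) - mu * exp ((2 / m - 1) * phi_ans m b c d q)) * exp (4 * sigma_ans b c q).

Lemma cR_div {U : UniformSpace} (F0 G0 : U -> R) x : continuous F0 x -> continuous G0 x -> G0 x <> 0 ->
  continuous (fun q => F0 q / G0 q) x.
Proof. intros; apply (cR_mult F0 (fun q => / G0 q)); auto. apply cR_inv; auto. Qed.

Ltac ctac2 Hf Hd Hv :=
  repeat match goal with
  | |- continuous (fun q => @?A q + @?B q) _ => apply (cR_plus A B)
  | |- continuous (fun q => @?A q - @?B q) _ => apply (cR_minus A B)
  | |- continuous (fun q => @?A q * @?B q) _ => apply (cR_mult A B)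
  | |- continuous (fun q => @?A q / @?B q) _ => apply (cR_div A B)
  | |- continuous (fun q => - @?A q) _ => apply (cR_opp A)
  | |- continuous (fun q => @?A q ^ _) _ => apply (cR_pow A)
  | |- continuous (fun q => exp (@?A q)) _ => apply (cR_exp A)
  | |- continuous (fun q => ln (@?A q)) _ => apply (cR_ln A)
  | |- continuous (fun q => fst q) _ => apply cP_fst
  | |- continuous (fun q => snd q) _ => apply cP_snd
  | |- continuous (fun _ => _) _ => apply cR_const
  | |- continuous (fun q => iter_pd ?w ?g q) _ =>
      first [exact (SM_cont _ g w _ Hf Hv) | exact (SM_cont _ g w _ Hd Hv)]
  | |- continuous (fun q => ?g q) _ => exact (SM_cont _ g [] _ Hd Hv)
  end.

Lemma all_cont a f m b c d mu dl Uf Ud q : 0 < m -> smooth_on Uf f -> smooth_on Ud dl -> OMG b c d Uf Ud q ->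
  continuous (V1 a f m b c d dl) q /\ continuous (V2 a f m b c d dl) q /\
  continuous (E1 a f m b c d dl) q /\ continuous (E2 a f m b c d dl) q /\
  continuous (Ig m b c d mu) q.
Proof.
  intros Hm Hf0 Hd0 (H1 & H2 & H3 & H4).
  assert (Hf : SM Uf f) by (exists Uf; split; auto).
  assert (Hd : SM Ud dl) by (exists Ud; split; auto).
  unfold Bf, Df, tcoord in H3, H4.
  assert (H5 : 0 < (d * b * (fst q + snd q) + d * c + 1) / (b * (fst q + snd q) + c))
    by (apply Rdiv_lt_0_compat; auto).
  unfold V1, V2, E1, E2, Ig, dZf, Zf, phi_ans, sigma_ans, Df, Bf, tcoord, P11e, P12e, P22e, dP11, dP12_1, dP12_2, dP22, dPi1, dPi2,
    F11, F12, F22, lprod, l1, l2, l3, l4, l5.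
  repeat split.
  all: ctac2 Hf Hd H1.
  all: ctac2 Hf Hd H2.
  all: cbv beta; try lra.
Qed.

Lemma Ig_int a f m b c d mu dl q : SM (closedP a) f -> DEL a f dl ->
  (forall p, inP a p -> 0 < u11 a f p /\ 0 < detH a f p) ->
  POS a b c d -> 0 < m -> MUEQ a f m b c d mu -> inP a q ->
  Ig m b c d mu q = E1 a f m b c d dl q + E2 a f m b c d dl q.
Proof.
  intros Hs Hd Hpd Hpos Hm Hmu Hq.
  pose proof (HeE_int a f m b c d mu dl q Hs Hd Hpd Hpos Hm Hmu Hq) as HE.
  destruct (Hpos q (inP_closed _ _ Hq)) as [HB HD].
  unfold HeE in HE.
  replace (E1 a f m b c d dl q + E2 a f m b c d dl q) with
    (dZf m b c d q * SWe a f dl q + Zf m b c d q * Se a f dl q) by (unfold E1, E2, SWe, Se; ring).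
  unfold Ig, dZf, Zf, phi_ans, sigma_ans.
  fold (Bf b c q) (Df b c d q) in *.
  fold (Bf b c q) in HB. fold (Df b c d q) in HD.
  set (SW := SWe a f dl q) in *. set (S := Se a f dl q) in *.
  set (B := Bf b c q) in *. set (D := Df b c d q) in *.
  assert (HDB : D = d * B + 1) by (unfold D, B, Df, Bf; ring).
  rewrite ln_div by auto.
  set (LD := ln D). set (LB := ln B).
  assert (ED : exp LD = D) by (apply exp_ln; auto).
  assert (EB : exp LB = B) by (apply exp_ln; auto).
  set (X := exp ((m - 1) * LD - (m + 3) * LB)).
  assert (A1 : exp (- (- m * (LD - LB))) * exp (4 * - LB) = X * exp (LD - LB)).
  { unfold X. rewrite <- !exp_plus. f_equal. ring. }
  assert (A2 : exp ((2 / m - 1) * (- m * (LD - LB))) * exp (4 * - LB) = X * exp (LB - LD)).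
  { unfold X. rewrite <- !exp_plus. f_equal. field. lra. }
  assert (E3 : exp (LD - LB) = D / B).
  { replace (LD - LB) with (LD + - LB) by ring. rewrite exp_plus, exp_Ropp, ED, EB. reflexivity. }
  assert (E4 : exp (LB - LD) = B / D).
  { replace (LB - LD) with (LB + - LD) by ring. rewrite exp_plus, exp_Ropp, ED, EB. reflexivity. }
  rewrite Rmult_minus_distr_r, Rmult_assoc, A2, A1, E3, E4.
  assert (Hmu' : mu = (D ^ 2 + (b ^ 2 * (d * B + D) + 2 * b ^ 2 * D + m * b ^ 2) * SW - b * D * B * S) / B ^ 2).
  { apply (Rmult_eq_reg_r (B ^ 2)). field_simplify; lra. apply pow_nonzero; lra. }
  rewrite Hmu'. clearbody D B SW S. subst D. field. lra.
Qed.

Lemma loc_pt_ball (P : pt -> Prop) q : locally q P ->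
  exists r : posreal, forall u v, Rabs (u - fst q) < r -> Rabs (v - snd q) < r -> P (u, v).
Proof.
  destruct q as [x y]. intros [e He]. exists e. intros u v H1 H2. apply He.
  split; apply ballR_iff; auto.
Qed.

Lemma loc_pos (F0 : pt -> R) q : continuous F0 q -> 0 < F0 q -> locally q (fun z => 0 < F0 z).
Proof.
  intros Hc Hp.
  pose proof (Hc (ball (F0 q) (mkposreal _ Hp)) (locally_ball _ _)) as H.
  unfold filtermap in H. generalize H. apply filter_imp. intros z Hz.
  pose proof (proj1 (ballR_iff _ _ _) Hz) as Hz'. simpl in Hz'.
  apply Rabs_def2 in Hz'. lra.
Qed.

Lemma cBf b c q : continuous (Bf b c) q.
Proof. unfold Bf, tcoord. apply (cR_plus (fun z => b * (fst z + snd z))); [|apply cR_const].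
  apply (cR_mult (fun _ => b)); [apply cR_const|]. apply (cR_plus (fun z => fst z) (fun z => snd z)); [apply cP_fst|apply cP_snd]. Qed.
Lemma cDf b c d q : continuous (Df b c d) q.
Proof. unfold Df, tcoord. apply (cR_plus (fun z => d * b * (fst z + snd z) + d * c)); [|apply cR_const].
  apply (cR_plus (fun z => d * b * (fst z + snd z))); [|apply cR_const].
  apply (cR_mult (fun _ => d * b)); [apply cR_const|]. apply (cR_plus (fun z => fst z) (fun z => snd z)); [apply cP_fst|apply cP_snd]. Qed.

Lemma OMG_open b c d Uf Ud : open Uf -> open Ud -> forall q, OMG b c d Uf Ud q ->
  exists r : posreal, forall u v, Rabs (u - fst q) < r -> Rabs (v - snd q) < r -> OMG b c d Uf Ud (u, v).
Proof.
  intros HUf HUd q (H1 & H2 & H3 & H4). apply loc_pt_ball.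
  pose proof (HUf q H1) as L1. pose proof (HUd q H2) as L2.
  pose proof (loc_pos _ q (cBf b c q) H3) as L3. pose proof (loc_pos _ q (cDf b c d q) H4) as L4.
  generalize (filter_and _ _ L1 (filter_and _ _ L2 (filter_and _ _ L3 L4))).
  apply filter_imp. intros z (Z1 & Z2 & Z3 & Z4). repeat split; auto.
Qed.

Lemma c2d_of (F0 : pt -> R) x y : continuous F0 (x, y) -> continuity_2d_pt (fun u v => F0 (u, v)) x y.
Proof.
  intros H. apply continuity_2d_pt_filterlim.
  apply (filterlim_ext F0). { intros [u v]; reflexivity. } exact H.
Qed.

Lemma cP_comp2 {U : UniformSpace} (g1 g2 : U -> R) (F0 : pt -> R) z : continuous g1 z -> continuous g2 z ->
  continuous F0 (g1 z, g2 z) -> continuous (fun q => F0 (g1 q, g2 q)) z.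
Proof.
  intros H1 H2 H3. apply (continuous_comp_2 g1 g2 (fun u v => F0 (u, v))); auto.
  apply (filterlim_ext F0). { intros [u v]; reflexivity. } exact H3.
Qed.

Lemma cline2 (F0 : pt -> R) x t : continuous F0 (x, t) -> continuous (fun s => F0 (x, s)) t.
Proof.
  intros H. apply (cP_comp2 (fun _ => x) (fun s => s) F0 t); auto.
  apply cR_const. apply filterlim_id.
Qed.

Definition OPN (Om : pt -> Prop) := forall q, Om q ->
  exists r : posreal, forall u v, Rabs (u - fst q) < r -> Rabs (v - snd q) < r -> Om (u, v).

Lemma tubeA a (Om : pt -> Prop) x : (forall q, closedP a q -> Om q) -> OPN Om -> 1 < a -> -1 < x < 0 ->
  exists r : posreal, forall y t, Rabs (y - x) < r -> -1 <= t <= a - 1 + r -> Om (y, t).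
Proof.
  intros Hc Ho Ha Hx.
  assert (Hq : closedP a (x, a - 1)) by (unfold closedP, l1, l2, l3, l4, l5; simpl; lra).
  destruct (Ho _ (Hc _ Hq)) as [r0 Hr0]. simpl in Hr0.
  assert (Hr : 0 < Rmin (r0 / 2) (Rmin (x + 1) (- x))) by (repeat apply Rmin_pos; try lra; pose proof (cond_pos r0); lra).
  exists (mkposreal _ Hr). simpl. intros y t Hy Ht.
  pose proof (Rmin_l (r0 / 2) (Rmin (x + 1) (- x))). pose proof (Rmin_r (r0 / 2) (Rmin (x + 1) (- x))).
  pose proof (Rmin_l (x + 1) (- x)). pose proof (Rmin_r (x + 1) (- x)). pose proof (cond_pos r0).
  apply Rabs_def2 in Hy.
  destruct (Rle_dec t (a - 1)).
  - apply Hc. unfold closedP, l1, l2, l3, l4, l5; simpl; lra.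
  - apply Hr0; apply Rabs_def1; lra.
Qed.

Lemma tubeB a (Om : pt -> Prop) x : (forall q, closedP a q -> Om q) -> OPN Om -> 1 < a -> 0 < x < a - 1 ->
  exists r : posreal, forall y t, Rabs (y - x) < r -> -1 <= t <= a - 1 - x + r -> Om (y, t).
Proof.
  intros Hc Ho Ha Hx.
  assert (Hq : closedP a (x, a - 1 - x)) by (unfold closedP, l1, l2, l3, l4, l5; simpl; lra).
  destruct (Ho _ (Hc _ Hq)) as [r0 Hr0]. simpl in Hr0.
  assert (Hr : 0 < Rmin (r0 / 2) (Rmin (x / 2) ((a - 1 - x) / 2))) by (repeat apply Rmin_pos; try lra; pose proof (cond_pos r0); lra).
  exists (mkposreal _ Hr). simpl. intros y t Hy Ht.
  pose proof (Rmin_l (r0 / 2) (Rmin (x / 2) ((a - 1 - x) / 2))). pose proof (Rmin_r (r0 / 2) (Rmin (x / 2) ((a - 1 - x) / 2))).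
  pose proof (Rmin_l (x / 2) ((a - 1 - x) / 2)). pose proof (Rmin_r (x / 2) ((a - 1 - x) / 2)). pose proof (cond_pos r0).
  apply Rabs_def2 in Hy.
  destruct (Rle_dec t (a - 1 - y)).
  - apply Hc. unfold closedP, l1, l2, l3, l4, l5; simpl; lra.
  - apply Hr0; apply Rabs_def1; lra.
Qed.


Definition DATA a (Om : pt -> Prop) (V E W Et Ig : pt -> R) :=
  (forall q, closedP a q -> Om q) /\ OPN Om /\
  (forall q, Om q -> is_derive (fun s => V (s, snd q)) (fst q) (E q) /\ continuous V q /\ continuous E q) /\
  (forall q, Om q -> is_derive (fun s => W (fst q, s)) (snd q) (Et q) /\ continuous W q /\ continuous Et q) /\
  (forall q, Om q -> continuous Ig q) /\
  (forall q, inP a q -> Ig q = E q + Et q).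

Lemma D_dv a Om V E W Et Ig y t : DATA a Om V E W Et Ig -> Om (y, t) ->
  Derive (fun u => V (u, t)) y = E (y, t).
Proof. intros (_ & _ & H & _) Hq. apply is_derive_unique. apply (proj1 (H _ Hq)). Qed.

Lemma D_c2d a Om V E W Et Ig x t : DATA a Om V E W Et Ig -> Om (x, t) ->
  continuity_2d_pt (fun u v => Derive (fun z => V (z, v)) u) x t.
Proof.
  intros HD Hq. pose proof HD as (_ & Ho & H & _).
  destruct (Ho _ Hq) as [r Hr].
  assert (L : locally_2d (fun u v => E (u, v) = Derive (fun z => V (z, v)) u) x t).
  { exists r. intros u v Hu Hv. symmetry. apply (D_dv a Om V E W Et Ig); auto. }
  apply (continuity_2d_pt_ext_loc (fun u v => E (u, v)) _ x t L).
  apply c2d_of. apply (proj2 (H _ Hq)).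
Qed.

Lemma D_exR a Om V E W Et Ig y lo hi : DATA a Om V E W Et Ig -> lo <= hi ->
  (forall t, lo <= t <= hi -> Om (y, t)) -> ex_RInt (fun t => V (y, t)) lo hi.
Proof.
  intros (_ & _ & H & _) Hlh Ht. apply (ex_RInt_continuous (V := R_CompleteNormedModule)).
  intros z Hz. rewrite Rmin_left, Rmax_right in Hz by lra.
  apply cline2. apply (H _ (Ht z Hz)).
Qed.

Lemma D_Et a Om V E W Et Ig x lo hi : DATA a Om V E W Et Ig -> lo <= hi ->
  (forall t, lo <= t <= hi -> Om (x, t)) -> RInt (fun t => Et (x, t)) lo hi = W (x, hi) - W (x, lo).
Proof.
  intros (_ & _ & _ & H & _) Hlh Ht.
  apply is_RInt_unique. apply (is_RInt_derive (fun t => W (x, t)) (fun t => Et (x, t))).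
  - intros t Ht'. rewrite Rmin_left, Rmax_right in Ht' by lra. apply (proj1 (H _ (Ht t Ht'))).
  - intros t Ht'. rewrite Rmin_left, Rmax_right in Ht' by lra. apply cline2. apply (proj2 (H _ (Ht t Ht'))).
Qed.

Lemma D_exR2 (G : pt -> R) (Om : pt -> Prop) x lo hi : lo <= hi ->
  (forall q, Om q -> continuous G q) ->
  (forall t, lo <= t <= hi -> Om (x, t)) -> ex_RInt (fun t => G (x, t)) lo hi.
Proof.
  intros Hlh H Ht. apply (ex_RInt_continuous (V := R_CompleteNormedModule)).
  intros z Hz. rewrite Rmin_left, Rmax_right in Hz by lra.
  apply cline2. apply (H _ (Ht z Hz)).
Qed.

Lemma D_J a Om V E W Et Ig x bx : DATA a Om V E W Et Ig -> -1 <= bx ->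
  (forall t, -1 <= t <= bx -> Om (x, t)) -> (forall t, -1 < t < bx -> inP a (x, t)) ->
  W (x, bx) = 0 -> W (x, -1) = 0 ->
  RInt (fun t => Ig (x, t)) (-1) bx = RInt (fun t => E (x, t)) (-1) bx.
Proof.
  intros HD Hb Hom Hin HW1 HW2. pose proof HD as (_ & _ & H1 & H2 & _ & HI).
  rewrite (RInt_ext (fun t => Ig (x, t)) (fun t => E (x, t) + Et (x, t))).
  2: { intros t Ht. rewrite Rmin_left, Rmax_right in Ht by lra. apply HI, Hin; lra. }
  assert (X1 : ex_RInt (fun t => E (x, t)) (-1) bx).
  { apply (D_exR2 E Om); auto. intros q Hq; apply (H1 q Hq). }
  assert (X2 : ex_RInt (fun t => Et (x, t)) (-1) bx).
  { apply (D_exR2 Et Om); auto. intros q Hq; apply (H2 q Hq). }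
  assert (HP : RInt (fun t => E (x, t) + Et (x, t)) (-1) bx =
      RInt (fun t => E (x, t)) (-1) bx + RInt (fun t => Et (x, t)) (-1) bx)
    by exact (RInt_plus _ _ _ _ X1 X2).
  rewrite HP, (D_Et a Om V E W Et Ig x (-1) bx HD Hb Hom), HW1, HW2. match goal with |- ?A = ?B => change (@eq R A B) end. ring.
Qed.

Lemma D_derA a Om V E W Et Ig x : 1 < a -> DATA a Om V E W Et Ig -> -1 < x < 0 ->
  W (x, a - 1) = 0 -> W (x, -1) = 0 ->
  is_derive (fun y => RInt (fun t => V (y, t)) (-1) (Rmin (a - 1) (a - 1 - y))) x
    (RInt (fun t => Ig (x, t)) (-1) (Rmin (a - 1) (a - 1 - x))).
Proof.
  intros Ha HD Hx HW1 HW2. pose proof HD as (Hc & Ho & H1 & H2 & H3 & HI).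
  destruct (tubeA a Om x Hc Ho Ha Hx) as [r Hr].
  rewrite Rmin_left by lra.
  apply (is_derive_ext_loc (fun y => RInt (fun t => V (y, t)) (-1) (a - 1))).
  { apply locR. exists (mkposreal _ (Ropp_0_gt_lt_contravar _ (proj2 Hx))). simpl.
    intros y Hy. apply Rabs_def2 in Hy. rewrite Rmin_left by lra. reflexivity. }
  rewrite (D_J a Om V E W Et Ig x (a - 1) HD); try lra; auto.
  2: { intros t Ht; apply Hc; unfold closedP, l1, l2, l3, l4, l5; simpl; lra. }
  2: { intros t Ht; unfold inP, l1, l2, l3, l4, l5; simpl; lra. }
  rewrite <- (RInt_ext (fun t => Derive (fun u => V (u, t)) x)).
  2: { intros t Ht. rewrite Rmin_left, Rmax_right in Ht by lra.
       apply (D_dv a Om V E W Et Ig); auto. apply Hc. unfold closedP, l1, l2, l3, l4, l5; simpl; lra. }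
  apply (is_derive_RInt_param (fun u t => V (u, t)) (-1) (a - 1) x).
  - apply locR. exists r. intros y Hy t Ht. rewrite Rmin_left, Rmax_right in Ht by lra.
    assert (Ht' : -1 <= t <= a - 1 + r) by (pose proof (cond_pos r); lra).
    apply (ex_intro _ _ (proj1 (H1 (y, t) (Hr y t Hy Ht')))).
  - intros t Ht. rewrite Rmin_left, Rmax_right in Ht by lra.
    apply (D_c2d a Om V E W Et Ig); auto. apply Hc. unfold closedP, l1, l2, l3, l4, l5; simpl; lra.
  - apply locR. exists r. intros y Hy. apply (D_exR a Om V E W Et Ig); auto; try lra.
    intros t Ht. apply Hr; auto. pose proof (cond_pos r); lra.
Qed.

Lemma D_derB a Om V E W Et Ig x : 1 < a -> DATA a Om V E W Et Ig -> 0 < x < a - 1 ->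
  V (x, a - 1 - x) = 0 -> W (x, a - 1 - x) = 0 -> W (x, -1) = 0 ->
  is_derive (fun y => RInt (fun t => V (y, t)) (-1) (Rmin (a - 1) (a - 1 - y))) x
    (RInt (fun t => Ig (x, t)) (-1) (Rmin (a - 1) (a - 1 - x))).
Proof.
  intros Ha HD Hx HV HW1 HW2. pose proof HD as (Hc & Ho & H1 & H2 & H3 & HI).
  destruct (tubeB a Om x Hc Ho Ha Hx) as [r Hr].
  rewrite Rmin_right by lra.
  apply (is_derive_ext_loc (fun y => RInt (fun t => V (y, t)) (-1) (a - 1 - y))).
  { apply locR. exists (mkposreal _ (proj1 Hx)). simpl.
    intros y Hy. apply Rabs_def2 in Hy. rewrite Rmin_right by lra. reflexivity. }
  rewrite (D_J a Om V E W Et Ig x (a - 1 - x) HD); try lra; auto.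
  2: { intros t Ht; apply Hc; unfold closedP, l1, l2, l3, l4, l5; simpl; lra. }
  2: { intros t Ht; unfold inP, l1, l2, l3, l4, l5; simpl; lra. }
  rewrite <- (RInt_ext (fun t => Derive (fun u => V (u, t)) x)).
  2: { intros t Ht. rewrite Rmin_left, Rmax_right in Ht by lra.
       apply (D_dv a Om V E W Et Ig); auto. apply Hc. unfold closedP, l1, l2, l3, l4, l5; simpl; lra. }
  set (eps := Rmin (r / 2) ((a - 1 - x) / 2)).
  assert (He : 0 < eps) by (unfold eps; apply Rmin_pos; pose proof (cond_pos r); lra).
  assert (He1 : eps <= r / 2) by apply Rmin_l.
  assert (He2 : eps <= (a - 1 - x) / 2) by apply Rmin_r.
  pose proof (cond_pos r) as Hr0.
  replace (RInt (fun t => Derive (fun u => V (u, t)) x) (-1) (a - 1 - x)) with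
    (RInt (fun t => Derive (fun u => V (u, t)) x) (-1) (a - 1 - x) + V (x, a - 1 - x) * (-1))
    by (rewrite HV; ring).
  apply (is_derive_RInt_param_bound_comp_aux3 (fun u t => V (u, t)) (-1) (fun u => a - 1 - u) x (-1)).
  - apply locR. exists r. intros y Hy. apply (D_exR a Om V E W Et Ig); auto; try lra.
    intros t Ht. apply Hr; auto. lra.
  - exists (mkposreal _ He). apply locR. exists r. intros y Hy. simpl.
    apply (D_exR a Om V E W Et Ig); auto; try lra.
    intros t Ht. apply Hr; auto. lra.
  - apply (is_derive_ext (fun u => a - 1 - u)). { intros; reflexivity. }
    auto_derive; auto; ring.
  - exists (mkposreal _ He). apply locR. exists r. intros y Hy t Ht. simpl in Ht.
    rewrite Rmin_left, Rmax_right in Ht by lra.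
    assert (Ht' : -1 <= t <= a - 1 - x + r) by lra.
    apply (ex_intro _ _ (proj1 (H1 (y, t) (Hr y t Hy Ht')))).
  - intros t Ht. rewrite Rmin_left, Rmax_right in Ht by lra.
    apply (D_c2d a Om V E W Et Ig); auto. apply Hc. unfold closedP, l1, l2, l3, l4, l5; simpl; lra.
  - assert (Hq : Om (x, a - 1 - x)) by (apply Hc; unfold closedP, l1, l2, l3, l4, l5; simpl; lra).
    destruct (Ho _ Hq) as [r1 Hr1]. exists r1. intros u v Hu Hv.
    apply (D_c2d a Om V E W Et Ig); auto.
  - apply (proj2 (continuity_pt_filterlim _ _)). apply cline2.
    assert (Hq : closedP a (x, a - 1 - x)) by (unfold closedP, l1, l2, l3, l4, l5; simpl; lra).
    apply (proj1 (proj2 (H1 _ (Hc _ Hq)))).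
Qed.

Lemma CW_ext (g1 g2 : R -> R) lo hi : (forall x, lo <= x <= hi -> g1 x = g2 x) -> CW g1 lo hi -> CW g2 lo hi.
Proof.
  intros He H x0 Hx0 eps. destruct (H x0 Hx0 eps) as [dl Hdl]. exists dl. intros x Hx Hd.
  rewrite <- !He by auto. apply Hdl; auto.
Qed.

Lemma CW_A a (Om : pt -> Prop) (G : pt -> R) : 1 < a -> (forall q, closedP a q -> Om q) ->
  (forall q, Om q -> continuous G q) ->
  CW (fun x => RInt (fun t => G (x, t)) (-1) (Rmin (a - 1) (a - 1 - x))) (-1) 0.
Proof.
  intros Ha Hc HG.
  apply (CW_ext (fun x => RInt (fun t => G (x, t)) (-1) (a - 1))).
  { intros x Hx. rewrite Rmin_left by lra. reflexivity. }
  apply (PC (fun x t => G (x, t))); try lra.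
  intros x s Hx Hs. apply c2d_of. apply HG, Hc. unfold closedP, l1, l2, l3, l4, l5; simpl; lra.
Qed.

Lemma CW_B a (Om : pt -> Prop) (G : pt -> R) : 1 < a -> (forall q, closedP a q -> Om q) ->
  (forall q, Om q -> continuous G q) ->
  CW (fun x => RInt (fun t => G (x, t)) (-1) (Rmin (a - 1) (a - 1 - x))) 0 (a - 1).
Proof.
  intros Ha Hc HG.
  apply (CW_ext (fun x => RInt (fun s => (a - x) * G (x, (a - x) * s + -1)) 0 1)).
  { intros x Hx. rewrite Rmin_right by lra.
    assert (HL := RInt_comp_lin (V := R_CompleteNormedModule) (fun t => G (x, t)) (a - x) (-1) 0 1).
    replace ((a - x) * 0 + -1) with (-1) in HL by ring.
    replace ((a - x) * 1 + -1) with (a - 1 - x) in HL by ring.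
    symmetry. rewrite <- HL. reflexivity.
    apply (D_exR2 G Om); auto; try lra. intros t Ht. apply Hc. unfold closedP, l1, l2, l3, l4, l5; simpl; lra. }
  apply (PC (fun x s => (a - x) * G (x, (a - x) * s + -1))); try lra.
  intros x s Hx Hs. apply (c2d_of (fun z => (a - fst z) * G (fst z, (a - fst z) * snd z + -1)) x s).
  apply (cR_mult (fun z => a - fst z) (fun z => G (fst z, (a - fst z) * snd z + -1))).
  - apply (cR_minus (fun _ => a)). apply cR_const. apply cP_fst.
  - apply (cP_comp2 (fun z => fst z) (fun z => (a - fst z) * snd z + -1) G).
    + apply cP_fst.
    + apply (cR_plus (fun z => (a - fst z) * snd z)). 2: apply cR_const.
      apply (cR_mult (fun z => a - fst z) (fun z => snd z)). 2: apply cP_snd.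
      apply (cR_minus (fun _ => a)). apply cR_const. apply cP_fst.
    + apply HG, Hc. unfold closedP, l1, l2, l3, l4, l5; simpl. nra.
Qed.

Lemma CW_exR (g : R -> R) lo hi : lo < hi -> CW g lo hi -> ex_RInt g lo hi.
Proof.
  intros Hlh H.
  apply (ex_RInt_ext (fun y => g (clamp lo hi y))).
  { intros x Hx. rewrite Rmin_left, Rmax_right in Hx by lra. rewrite clamp_id; auto; lra. }
  apply (ex_RInt_continuous (V := R_CompleteNormedModule)). intros z _.
  apply CW_clamp; auto; lra.
Qed.

Lemma RInt_zero_fn (g : R -> R) lo hi : (forall t, g t = 0) -> RInt g lo hi = 0.
Proof.
  intros H. rewrite (RInt_ext g (fun _ => 0)) by (intros; apply H).
  rewrite RInt_const. unfold scal; simpl; unfold mult; simpl. ring.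
Qed.

Lemma D_total a Om V E W Et Ig : 1 < a -> DATA a Om V E W Et Ig ->
  (forall t, V (-1, t) = 0) -> (forall t, V (a - 1, t) = 0) ->
  (forall x, V (x, a - 1 - x) = 0) -> (forall x, W (x, -1) = 0) ->
  (forall x, W (x, a - 1) = 0) -> (forall x, W (x, a - 1 - x) = 0) ->
  RInt (fun x => RInt (fun t => Ig (x, t)) (-1) (Rmin (a - 1) (a - 1 - x))) (-1) (a - 1) = 0.
Proof.
  intros Ha HD HV1 HV2 HV3 HW1 HW2 HW3. pose proof HD as (Hc & Ho & H1 & H2 & H3 & HI).
  set (K := fun y => RInt (fun t => V (y, t)) (-1) (Rmin (a - 1) (a - 1 - y))).
  set (J := fun x => RInt (fun t => Ig (x, t)) (-1) (Rmin (a - 1) (a - 1 - x))).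
  assert (CV : forall q, Om q -> continuous V q) by (intros q Hq; apply (H1 q Hq)).
  assert (CJA : CW J (-1) 0) by (apply (CW_A a Om Ig); auto).
  assert (CJB : CW J 0 (a - 1)) by (apply (CW_B a Om Ig); auto).
  assert (CKA : CW K (-1) 0) by (apply (CW_A a Om V); auto).
  assert (CKB : CW K 0 (a - 1)) by (apply (CW_B a Om V); auto).
  assert (FA : RInt J (-1) 0 = K 0 - K (-1)).
  { apply FTCP; auto; try lra. intros x Hx. apply (D_derA a Om V E W Et Ig); auto. }
  assert (FB : RInt J 0 (a - 1) = K (a - 1) - K 0).
  { apply FTCP; auto; try lra. intros x Hx. apply (D_derB a Om V E W Et Ig); auto. }
  assert (Ch : RInt J (-1) 0 + RInt J 0 (a - 1) = RInt J (-1) (a - 1)).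
  { exact (RInt_Chasles J (-1) 0 (a - 1) (CW_exR J (-1) 0 ltac:(lra) CJA) (CW_exR J 0 (a - 1) ltac:(lra) CJB)). }
  change (RInt J (-1) (a - 1) = 0). rewrite <- Ch, FA, FB.
  assert (K1 : K (-1) = 0) by (unfold K; apply RInt_zero_fn; auto).
  assert (K2 : K (a - 1) = 0) by (unfold K; apply RInt_zero_fn; auto).
  rewrite K1, K2. match goal with |- ?A = ?B => change (@eq R A B) end. ring.
Qed.

Lemma integral_part a f m b c d mu dl : 1 < a -> 0 < m ->
  smooth_up_to (closedP a) f -> smooth_up_to (closedP a) dl -> DEL a f dl ->
  (forall p, inP a p -> 0 < u11 a f p /\ 0 < detH a f p) ->
  POS a b c d -> MUEQ a f m b c d mu ->
  RInt (fun x1 => RInt (fun x2 => Ig m b c d mu (x1, x2)) (-1) (Rmin (a - 1) (a - 1 - x1))) (-1) (a - 1) = 0.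
Proof.
  intros Ha Hm Hf Hdl Hd Hpd Hpos Hmu.
  pose proof (SM_of a f Hf) as Hs.
  destruct Hf as (Uf & HUo & HUc & HUs).
  destruct Hdl as (Ud & HDo & HDc & HDs).
  pose proof (D_total a (OMG b c d Uf Ud) (V1 a f m b c d dl) (E1 a f m b c d dl)
           (V2 a f m b c d dl) (E2 a f m b c d dl) (Ig m b c d mu) Ha) as HT.
  refine (HT _ _ _ _ _ _ _).
  - split; [|split; [|split; [|split; [|split]]]].
    + intros q Hq. destruct (Hpos q Hq). split; [exact (HUc q Hq)|split; [exact (HDc q Hq)| split; assumption]].
    + intros q Hq. exact (OMG_open b c d Uf Ud HUo HDo q Hq).
    + intros [x y] Hq. split; [|split].
      * exact (V1_d1 a f m b c d dl Uf Ud x y HUs HDs Hq).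
      * exact (proj1 (all_cont a f m b c d mu dl Uf Ud (x, y) Hm HUs HDs Hq)).
      * exact (proj1 (proj2 (proj2 (all_cont a f m b c d mu dl Uf Ud (x, y) Hm HUs HDs Hq)))).
    + intros [x y] Hq. split; [|split].
      * exact (V2_d2 a f m b c d dl Uf Ud x y HUs HDs Hq).
      * exact (proj1 (proj2 (all_cont a f m b c d mu dl Uf Ud (x, y) Hm HUs HDs Hq))).
      * exact (proj1 (proj2 (proj2 (proj2 (all_cont a f m b c d mu dl Uf Ud (x, y) Hm HUs HDs Hq))))).
    + intros q Hq. exact (proj2 (proj2 (proj2 (proj2 (all_cont a f m b c d mu dl Uf Ud q Hm HUs HDs Hq))))).
    + intros q Hq. exact (Ig_int a f m b c d mu dl q Hs Hd Hpd Hpos Hm Hmu Hq).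
  - intros t; unfold V1, P11e, P12e, lprod, l1, l2, l3, l4, l5; cbn [fst snd]; ring.
  - intros t; unfold V1, P11e, P12e, lprod, l1, l2, l3, l4, l5; cbn [fst snd]; ring.
  - intros t; unfold V1, P11e, P12e, lprod, l1, l2, l3, l4, l5; cbn [fst snd]; ring.
  - intros t; unfold V2, P12e, P22e, lprod, l1, l2, l3, l4, l5; cbn [fst snd]; ring.
  - intros t; unfold V2, P12e, P22e, lprod, l1, l2, l3, l4, l5; cbn [fst snd]; ring.
  - intros t; unfold V2, P12e, P22e, lprod, l1, l2, l3, l4, l5; cbn [fst snd]; ring.
Qed.

Theorem proposition4p3 :
  forall (a m b c d mu : R) (f : pt -> R),
    1 < a -> 0 < m ->
    smooth_up_to (closedP a) f ->
    (forall p : pt, closedP a p -> f (snd p, fst p) = f p) ->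
    (forall p : pt, inP a p -> 0 < u11 a f p /\ 0 < detH a f p) ->
    (exists delta : pt -> R,
        smooth_up_to (closedP a) delta /\
        (forall p : pt, closedP a p -> 0 < delta p) /\
        (forall p : pt, inP a p -> detH a f p * (delta p * lprod a p) = 1)) ->
    (forall p : pt, closedP a p ->
        0 < b * tcoord p + c /\ 0 < d * b * tcoord p + d * c + 1) ->
    (exists lam : R,
        quasi_einstein_on (inP a)
          (confg (sigma_ans b c) (gK a f)) (confginv (sigma_ans b c) (gKinv a f))
          (phi_ans m b c d) lam m) ->
    (forall p : pt, inP a p ->
        1 - / m * (laplacian (confg (sigma_ans b c) (gK a f))
                             (confginv (sigma_ans b c) (gKinv a f)) (phi_ans m b c d) p
                   - gradsq (confginv (sigma_ans b c) (gKinv a f)) (phi_ans m b c d) p)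
        = mu * exp (2 * phi_ans m b c d p / m)) ->
    4 * b / ((c - 2 * b) * (d * c + 1 - 2 * d * b))
      = 1 / (c - 2 * b) ^ 2 - mu / (d * c + 1 - 2 * d * b) ^ 2
    /\ 0 = 1 / (c + (a - 2) * b) ^ 2 - mu / (d * c + 1 + (a - 2) * d * b) ^ 2
    /\ - 2 * b / ((c + (a - 1) * b) * (d * c + 1 + (a - 1) * d * b))
      = 1 / (c + (a - 1) * b) ^ 2 - mu / (d * c + 1 + (a - 1) * d * b) ^ 2
    /\ RInt (fun x1 =>
          RInt (fun x2 =>
              (exp (- phi_ans m b c d (x1, x2))
               - mu * exp ((2 / m - 1) * phi_ans m b c d (x1, x2)))
              * exp (4 * sigma_ans b c (x1, x2)))
            (-1) (Rmin (a - 1) (a - 1 - x1)))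
         (-1) (a - 1) = 0.
Proof.
  intros a m b c d mu f Ha Hm Hf Hsym Hpd (dl & Hdl & Hdp & Hdet) Hpos _ Hmu.
  pose proof (SM_of a f Hf) as Hs.
  assert (Hd : DEL a f dl) by (split; [exact (SM_of a dl Hdl) | split; assumption]).
  split; [|split; [|split]].
  - exact (vertex1 a f m b c d mu dl Ha Hs Hd Hpd Hpos Hm Hmu).
  - exact (vertex2 a f m b c d mu dl Ha Hs Hd Hpd Hpos Hm Hmu).
  - exact (vertex3 a f m b c d mu dl Ha Hs Hd Hpd Hpos Hm Hmu).
  - exact (integral_part a f m b c d mu dl Ha Hm Hf Hdl Hd Hpd Hpos Hmu).
Qed.
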